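(* Let $R$ be a triad hexagon with focal points $A$ (top), $B$ (bottom left), $C$ (bottom right), with bowties of types $(a,a')$ at $A$, $(b,b')$ at $B$, $(c,c')$ at $C$. Define its S-depth, NE-depth and NW-depth to be $$\delta(BC,S)-b-c,\qquad \delta(AC,NE)-a-c,\qquad \delta(AB,NW)-a-b,$$ respectively. Then: (a) $R$ is tileable (admits at least one lozenge tiling) if and only if its S-depth, NE-depth and NW-depth are all non-negative. (b) The S-depth, NE-depth and NW-depth of a triad hexagon are unchanged by any bowtie squeezing operation. (c) If $R$ is tileable, then every triad hexagon obtained from $R$ by a finite sequence of bowtie squeezings is also tileable.
   Context: Work on the triangular lattice, drawn with one family of lattice lines horizontal; unit triangles are up-pointing or down-pointing. A lozenge is the union of two unit triangles sharing an edge. Lengths of lattice segments are measured in unit-triangle side lengths; distances from a point or a segment to a lattice line parallel to it (or to a side of a hexagon) are measured in lattice spacings (the distance between consecutive parallel lattice lines counts as 1). The sides of a lattice hexagon with horizontal top and bottom are called N, NE, SE, S, SW, NW (clockwise from the top); $\delta(P,N)$ denotes the distance from a point or segment $P$ to the line containing the N side, and similarly for the other sides. Triad hexagons. Let $x,y,z,a,b,c,a',b',c'$ be non-negative integers. Let $A,B,C$ be lattice points forming an up-pointing equilateral lattice triangle of side $f$ ($A$ the top vertex, $B$ the bottom-left, $C$ the bottom-right), with $f\ge a'+b'+c'$; $f$ is the focal distance, $A,B,C$ the focal points, $AB,AC,BC$ the focal edges. The $(a,a')$-bowtie at $A$ is the union of the down-pointing lattice triangle of side $a$ with bottom vertex $A$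 and the up-pointing lattice triangle of side $a'$ with top vertex $A$. The $(b,b')$-bowtie at $B$ is the union of the up-pointing triangle of side $b'$ with bottom-left vertex $B$ and the down-pointing triangle of side $b$ with top-right vertex $B$. The $(c,c')$-bowtie at $C$ is the union of the up-pointing triangle of side $c'$ with bottom-right vertex $C$ and the down-pointing triangle of side $c$ with top-left vertex $C$. (Triangles of side $0$ are empty; the lobes of sides $a',b',c'$ are called inner lobes, those of sides $a,b,c$ outer lobes.) Let $H$ be a lattice hexagon with side lengths N: $x+a+b+c$, NE: $y+a'+b'+c'$, SE: $z+a+b+c$, S: $x+a'+b'+c'$, SW: $y+a+b+c$, NW: $z+a'+b'+c'$, containing the three bowties. The triad hexagon $R^{A,B,C}_{x,y,z}(a,b,c,a',b',c')$ is $H$ with the three bowties removed. Bowtie squeezing. Squeezing out the bowtie at $A$ by $d$ units ($0\le d\le a'$): keep $A$ fixed and replace the $(a,a')$-bowtie by an $(a+d,a'-d)$-bowtie; translate the bowtie at $B$ by $d$ units in the direction of $\overrightarrow{BA}$ and the bowtie at $C$ by $d$ units in the direction of $\overrightarrow{CA}$ (so the focal distance becomes $f-d$); translate the N, NW, NE sides of the hexagon outward by $d$ lattice spacings and the S, SW, SE sides inward by $d$ lattice spacings. Squeezing out the bowtie at $B$ by $d\le b'$ is defined symmetrically: $B$ fixed, $(b,b')\to(b+d,b'-d)$, bowties at $A$ and $C$ translated $d$ units in the directions $\overrightarrow{AB}$, $\overrightarrow{CB}$, sides SW, NW, S moved outward and NE, N, SE moved inward by $d$ lattice spacings. Squeezing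 out the bowtie at $C$ by $d\le c'$: $C$ fixed, $(c,c')\to(c+d,c'-d)$, bowties at $A$ and $B$ translated $d$ units in the directions $\overrightarrow{AC}$, $\overrightarrow{BC}$, sides SE, NE, S moved outward and NW, N, SW moved inward by $d$ lattice spacings. Squeezing in a bowtie by $d$ units (with $d$ at most the size of its outer lobe) is the inverse operation. Each of these operations produces again a triad hexagon (with the same $x,y,z$). A bowtie squeezing means any of these operations. *)

(* Defs.v *)
From Stdlib Require Import ZArith List Relations.
Import ListNotations.
Open Scope Z_scope.

(* The lattice point with coordinates (i,j) is
   i*e1 + j*e2 with e1 = (1,0), e2 = (1/2, sqrt 3/2).  Lattice lines are
   j = const (horizontal), i = const (direction e2) and i+j = const
   (direction e2 - e1); consecutive parallel lattice lines differ by 1. *)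
Definition point := (Z * Z)%type.

Inductive tri := Up (i j : Z) | Down (i j : Z).

Definition verts (t : tri) : list point :=
  match t with
  | Up i j => [(i, j); (i + 1, j); (i, j + 1)]
  | Down i j => [(i + 1, j); (i, j + 1); (i + 1, j + 1)]
  end.

(* two distinct unit triangles sharing an edge (= two common vertices) *)
Definition adjacent (t u : tri) : Prop :=
  t <> u /\ exists v w : point, v <> w /\
    In v (verts t) /\ In w (verts t) /\ In v (verts u) /\ In w (verts u).

Definition region := tri -> Prop.

Definition lozenge_tiling (R : region) (L : tri * tri -> Prop) : Prop :=
  (forall p, L p -> adjacent (fst p) (snd p) /\ R (fst p) /\ R (snd p)) /\
  (forall s, R s -> exists! p, L p /\ (s = fst p \/ s = snd p)).

Definition tileable (R : region) : Prop := exists L, lozenge_tiling R L.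

(* a unit triangle lies in a (convex, closed) point set P iff all its
   vertices do *)
Definition tri_in (P : point -> Prop) (t : tri) : Prop :=
  forall v, In v (verts t) -> P v.

(* up-pointing lattice triangle of side s with bottom-left vertex P *)
Definition up_pts (P : point) (s : Z) (v : point) : Prop :=
  fst P <= fst v /\ snd P <= snd v /\ fst v + snd v <= fst P + snd P + s.

(* down-pointing lattice triangle of side s with top-left vertex P *)
Definition down_pts (P : point) (s : Z) (v : point) : Prop :=
  snd v <= snd P /\ fst v <= fst P + s /\ fst P + snd P <= fst v + snd v.

(* The hexagon H is the intersection of the
   strips  hS <= j <= hN  (S and N sides),  hW <= i <= hE  (NW and SE
   sides),  hSW <= i+j <= hNE  (SW and NE sides).  The focal points are
   A = tA, B = A - f e2, C = A + f (e1 - e2). *)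
Record triad := mkTriad {
  tx : nat; ty : nat; tz : nat;
  ta : nat; tb : nat; tc : nat;
  ta' : nat; tb' : nat; tc' : nat;
  tf : nat;
  tA : point;
  hN : Z; hS : Z; hW : Z; hE : Z; hSW : Z; hNE : Z }.

Definition ptA (T : triad) : point := tA T.
Definition ptB (T : triad) : point := (fst (tA T), snd (tA T) - Z.of_nat (tf T)).
Definition ptC (T : triad) : point :=
  (fst (tA T) + Z.of_nat (tf T), snd (tA T) - Z.of_nat (tf T)).

Definition hex_pts (T : triad) (v : point) : Prop :=
  hS T <= snd v <= hN T /\ hW T <= fst v <= hE T /\
  hSW T <= fst v + snd v <= hNE T.

Definition lobeA_out (T : triad) := (* down, side a, bottom vertex A *)
  down_pts (fst (ptA T) - Z.of_nat (ta T), snd (ptA T) + Z.of_nat (ta T)) (Z.of_nat (ta T)).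
Definition lobeA_in (T : triad) := (* up, side a', top vertex A *)
  up_pts (fst (ptA T), snd (ptA T) - Z.of_nat (ta' T)) (Z.of_nat (ta' T)).
Definition lobeB_in (T : triad) :=
  up_pts (ptB T) (Z.of_nat (tb' T)).
Definition lobeB_out (T : triad) := (* down, side b, top-right vertex B *)
  down_pts (fst (ptB T) - Z.of_nat (tb T), snd (ptB T)) (Z.of_nat (tb T)).
Definition lobeC_in (T : triad) := (* up, side c', bottom-right vertex C *)
  up_pts (fst (ptC T) - Z.of_nat (tc' T), snd (ptC T)) (Z.of_nat (tc' T)).
Definition lobeC_out (T : triad) :=
  down_pts (ptC T) (Z.of_nat (tc T)).

Definition lobes (T : triad) : list (point -> Prop) :=
  [lobeA_out T; lobeA_in T; lobeB_in T; lobeB_out T; lobeC_in T; lobeC_out T].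

(* Validity: focal distance condition, side lengths of H, and H contains
   the three bowties. *)
Definition is_triad (T : triad) : Prop :=
  let n := Z.of_nat in
  (tf T >= ta' T + tb' T + tc' T)%nat /\
  (* N  *) hNE T - hN T - hW T = n (tx T + ta T + tb T + tc T)%nat /\
  (* NE *) hN T + hE T - hNE T = n (ty T + ta' T + tb' T + tc' T)%nat /\
  (* SE *) hNE T - hE T - hS T = n (tz T + ta T + tb T + tc T)%nat /\
  (* S  *) hE T - hSW T + hS T = n (tx T + ta' T + tb' T + tc' T)%nat /\
  (* SW *) hSW T - hW T - hS T = n (ty T + ta T + tb T + tc T)%nat /\
  (* NW *) hN T - hSW T + hW T = n (tz T + ta' T + tb' T + tc' T)%nat /\
  (forall P, In P (lobes T) -> forall v, P v -> hex_pts T v).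

Definition triad_region (T : triad) : region :=
  fun t => tri_in (hex_pts T) t /\ ~ (exists P, In P (lobes T) /\ tri_in P t).

Definition S_depth (T : triad) : Z :=
  (snd (ptB T) - hS T) - Z.of_nat (tb T) - Z.of_nat (tc T).
Definition NE_depth (T : triad) : Z :=
  (hNE T - (fst (ptA T) + snd (ptA T))) - Z.of_nat (ta T) - Z.of_nat (tc T).
Definition NW_depth (T : triad) : Z :=
  (fst (ptA T) - hW T) - Z.of_nat (ta T) - Z.of_nat (tb T).

Definition sq_out_A (d : nat) (T : triad) : triad :=
  let e := Z.of_nat d in
  {| tx := tx T; ty := ty T; tz := tz T;
     ta := ta T + d; tb := tb T; tc := tc T;
     ta' := ta' T - d; tb' := tb' T; tc' := tc' T;
     tf := tf T - d; tA := tA T;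
     hN := hN T + e; hW := hW T - e; hNE := hNE T + e;
     hS := hS T + e; hSW := hSW T + e; hE := hE T - e |}.
Definition sq_in_A (d : nat) (T : triad) : triad :=
  let e := Z.of_nat d in
  {| tx := tx T; ty := ty T; tz := tz T;
     ta := ta T - d; tb := tb T; tc := tc T;
     ta' := ta' T + d; tb' := tb' T; tc' := tc' T;
     tf := tf T + d; tA := tA T;
     hN := hN T - e; hW := hW T + e; hNE := hNE T - e;
     hS := hS T - e; hSW := hSW T - e; hE := hE T + e |}.
Definition sq_out_B (d : nat) (T : triad) : triad :=
  let e := Z.of_nat d in
  {| tx := tx T; ty := ty T; tz := tz T;
     ta := ta T; tb := tb T + d; tc := tc T;
     ta' := ta' T; tb' := tb' T - d; tc' := tc' T;
     tf := tf T - d; tA := (fst (tA T), snd (tA T) - e);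
     hSW := hSW T - e; hW := hW T - e; hS := hS T - e;
     hNE := hNE T - e; hN := hN T - e; hE := hE T - e |}.
Definition sq_in_B (d : nat) (T : triad) : triad :=
  let e := Z.of_nat d in
  {| tx := tx T; ty := ty T; tz := tz T;
     ta := ta T; tb := tb T - d; tc := tc T;
     ta' := ta' T; tb' := tb' T + d; tc' := tc' T;
     tf := tf T + d; tA := (fst (tA T), snd (tA T) + e);
     hSW := hSW T + e; hW := hW T + e; hS := hS T + e;
     hNE := hNE T + e; hN := hN T + e; hE := hE T + e |}.
Definition sq_out_C (d : nat) (T : triad) : triad :=
  let e := Z.of_nat d in
  {| tx := tx T; ty := ty T; tz := tz T;
     ta := ta T; tb := tb T; tc := tc T + d;
     ta' := ta' T; tb' := tb' T; tc' := tc' T - d;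
     tf := tf T - d; tA := (fst (tA T) + e, snd (tA T) - e);
     hE := hE T + e; hNE := hNE T + e; hS := hS T - e;
     hW := hW T + e; hN := hN T - e; hSW := hSW T + e |}.
Definition sq_in_C (d : nat) (T : triad) : triad :=
  let e := Z.of_nat d in
  {| tx := tx T; ty := ty T; tz := tz T;
     ta := ta T; tb := tb T; tc := tc T - d;
     ta' := ta' T; tb' := tb' T; tc' := tc' T + d;
     tf := tf T + d; tA := (fst (tA T) - e, snd (tA T) + e);
     hE := hE T - e; hNE := hNE T - e; hS := hS T + e;
     hW := hW T - e; hN := hN T + e; hSW := hSW T - e |}.

Inductive squeezing : triad -> triad -> Prop :=
| SqOutA d T : (d <= ta' T)%nat -> squeezing T (sq_out_A d T)
| SqInA  d T : (d <= ta T)%nat  -> squeezing T (sq_in_A d T)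
| SqOutB d T : (d <= tb' T)%nat -> squeezing T (sq_out_B d T)
| SqInB  d T : (d <= tb T)%nat  -> squeezing T (sq_in_B d T)
| SqOutC d T : (d <= tc' T)%nat -> squeezing T (sq_out_C d T)
| SqInC  d T : (d <= tc T)%nat  -> squeezing T (sq_in_C d T).

Definition triad_squeezing (T T' : triad) : Prop :=
  is_triad T /\ is_triad T' /\ squeezing T T'.

(* Main.v *)
Require Import Defs.
From Stdlib Require Import ZArith List Relations.
From Stdlib Require Import Lia Classical ClassicalEpsilon FinFun.
Import ListNotations.
Open Scope Z_scope.

Lemma tileable_ext (R R' : region) :
  (forall t, R t <-> R' t) -> tileable R -> tileable R'.
Proof.
  intros HR [L [H1 H2]]. exists L. split.
  - intros p Hp. destruct (H1 p Hp) as [Ha [Hb Hc]]. split; [exact Ha|].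
    split; apply HR; assumption.
  - intros s Hs. apply HR in Hs. exact (H2 s Hs).
Qed.

Lemma tileable_union (R R1 R2 : region) :
  (forall t, R t <-> R1 t \/ R2 t) ->
  (forall t, R1 t -> R2 t -> False) ->
  tileable R1 -> tileable R2 -> tileable R.
Proof.
  intros HR Hd [L1 [A1 B1]] [L2 [A2 B2]].
  exists (fun p => L1 p \/ L2 p). split.
  - intros p [Hp|Hp].
    + destruct (A1 p Hp) as [Ha [Hb Hc]]. split; [exact Ha|]. split; apply HR; auto.
    + destruct (A2 p Hp) as [Ha [Hb Hc]]. split; [exact Ha|]. split; apply HR; auto.
  - intros s Hs. apply HR in Hs. destruct Hs as [Hs|Hs].
    + destruct (B1 s Hs) as [p [[Hp Hsp] Hu]]. exists p. split; [split; auto|].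
      intros p' [[Hp'|Hp'] Hsp'].
      * apply Hu; auto.
      * exfalso. destruct (A2 p' Hp') as [_ [Hb Hc]].
        destruct Hsp' as [E|E]; subst; [exact (Hd _ Hs Hb)|exact (Hd _ Hs Hc)].
    + destruct (B2 s Hs) as [p [[Hp Hsp] Hu]]. exists p. split; [split; auto|].
      intros p' [[Hp'|Hp'] Hsp'].
      * exfalso. destruct (A1 p' Hp') as [_ [Hb Hc]].
        destruct Hsp' as [E|E]; subst; [exact (Hd _ Hb Hs)|exact (Hd _ Hc Hs)].
      * apply Hu; auto.
Qed.

Lemma adjV i j : adjacent (Up i j) (Down i (j-1)).
Proof.
  split; [discriminate|]. exists (i, j), (i+1, j). split.
  - intros E; inversion E; lia.
  - simpl. replace (j - 1 + 1) with j by lia. tauto.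
Qed.
Lemma adjL i j : adjacent (Up i j) (Down (i-1) j).
Proof.
  split; [discriminate|]. exists (i, j), (i, j+1). split.
  - intros E; inversion E; lia.
  - simpl. replace (i - 1 + 1) with i by lia. tauto.
Qed.
Lemma adjR i j : adjacent (Up i j) (Down i j).
Proof.
  split; [discriminate|]. exists (i+1, j), (i, j+1). split.
  - intros E; inversion E; lia.
  - simpl. tauto.
Qed.

Section Rule.
Variable Rg : region.
Variables condR condL : Z -> Z -> Prop.
Definition isR i j := condR i j.
Definition isL i j := ~ condR i j /\ condL i j.
Definition isV i j := ~ condR i j /\ ~ condL i j.

Definition ruleL (p : tri * tri) : Prop :=
  exists i j, Rg (Up i j) /\
   ((isV i j /\ p = (Up i j, Down i (j-1))) \/
    (isL i j /\ p = (Up i j, Down (i-1) j)) \/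
    (isR i j /\ p = (Up i j, Down i j))).

Hypothesis H2 : forall i j, Rg (Up i j) ->
  (isV i j -> Rg (Down i (j-1))) /\ (isL i j -> Rg (Down (i-1) j)) /\
  (isR i j -> Rg (Down i j)).
Hypothesis H3 : forall i j, Rg (Down i j) ->
  (Rg (Up i (j+1)) /\ isV i (j+1)) \/ (Rg (Up (i+1) j) /\ isL (i+1) j) \/
  (Rg (Up i j) /\ isR i j).
Hypothesis H4 : forall i j, Rg (Down i j) ->
  ~ ((Rg (Up i (j+1)) /\ isV i (j+1)) /\ (Rg (Up (i+1) j) /\ isL (i+1) j)) /\
  ~ ((Rg (Up i (j+1)) /\ isV i (j+1)) /\ (Rg (Up i j) /\ isR i j)) /\
  ~ ((Rg (Up (i+1) j) /\ isL (i+1) j) /\ (Rg (Up i j) /\ isR i j)).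

Lemma rule_tiling : tileable Rg.
Proof.
  exists ruleL. split.
  - intros p [i [j [Hu [[Ht E]|[[Ht E]|[Ht E]]]]]]; subst p; simpl;
      destruct (H2 i j Hu) as [A [B C]].
    + split; [apply adjV|auto].
    + split; [apply adjL|auto].
    + split; [apply adjR|auto].
  - intros s Hs. destruct s as [i j|i j].
    +
      destruct (classic (condR i j)) as [cr|ncr].
      * exists (Up i j, Down i j). split.
        -- split; [|left; reflexivity]. exists i, j. split; [exact Hs|]. right; right. split; [exact cr|reflexivity].
        -- intros p' [[i' [j' [Hu' Hp']]] Hs'].
           destruct Hp' as [[Ht E]|[[Ht E]|[Ht E]]]; subst p'; simpl in Hs';
             destruct Hs' as [E'|E']; inversion E'; subst;
             unfold isV, isL, isR in *; try tauto; reflexivity.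
      * destruct (classic (condL i j)) as [cl|ncl].
        -- exists (Up i j, Down (i-1) j). split.
           ++ split; [|left; reflexivity]. exists i, j. split; [exact Hs|]. right; left.
              split; [split; assumption|reflexivity].
           ++ intros p' [[i' [j' [Hu' Hp']]] Hs'].
              destruct Hp' as [[Ht E]|[[Ht E]|[Ht E]]]; subst p'; simpl in Hs';
                destruct Hs' as [E'|E']; inversion E'; subst;
                unfold isV, isL, isR in *; try tauto; reflexivity.
        -- exists (Up i j, Down i (j-1)). split.
           ++ split; [|left; reflexivity]. exists i, j. split; [exact Hs|]. left.
              split; [split; assumption|reflexivity].
           ++ intros p' [[i' [j' [Hu' Hp']]] Hs'].
              destruct Hp' as [[Ht E]|[[Ht E]|[Ht E]]]; subst p'; simpl in Hs';
                destruct Hs' as [E'|E']; inversion E'; subst;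
                unfold isV, isL, isR in *; try tauto; reflexivity.
    +
      pose proof (H4 i j Hs) as [N1 [N2 N3]].
      destruct (H3 i j Hs) as [[Hu Ht]|[[Hu Ht]|[Hu Ht]]].
      * exists (Up i (j+1), Down i (j+1-1)). split.
        -- split. exists i, (j+1). split; auto.
           right. replace (j+1-1) with j by lia. reflexivity.
        -- intros p' [[i' [j' [Hu' Hp']]] Hs'].
           destruct Hp' as [[Ht' E]|[[Ht' E]|[Ht' E]]]; subst p'; simpl in Hs';
             destruct Hs' as [E'|E']; inversion E'; subst.
           ++ replace (j' - 1 + 1) with j' by lia. reflexivity.
           ++ exfalso. apply N1. replace (i' - 1 + 1) with i' in * by lia. auto.
           ++ exfalso. apply N2. auto.
      * exists (Up (i+1) j, Down (i+1-1) j). split.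
        -- split. exists (i+1), j. split; auto.
           right. replace (i+1-1) with i by lia. reflexivity.
        -- intros p' [[i' [j' [Hu' Hp']]] Hs'].
           destruct Hp' as [[Ht' E]|[[Ht' E]|[Ht' E]]]; subst p'; simpl in Hs';
             destruct Hs' as [E'|E']; inversion E'; subst.
           ++ exfalso. apply N1. replace (j' - 1 + 1) with j' in * by lia. auto.
           ++ replace (i' - 1 + 1) with i' by lia. reflexivity.
           ++ exfalso. apply N3. auto.
      * exists (Up i j, Down i j). split.
        -- split. exists i, j. split; auto. right. reflexivity.
        -- intros p' [[i' [j' [Hu' Hp']]] Hs'].
           destruct Hp' as [[Ht' E]|[[Ht' E]|[Ht' E]]]; subst p'; simpl in Hs';
             destruct Hs' as [E'|E']; inversion E'; subst.
           ++ exfalso. apply N2. replace (j' - 1 + 1) with j' in * by lia. auto.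
           ++ exfalso. apply N3. replace (i' - 1 + 1) with i' in * by lia. auto.
           ++ reflexivity.
Qed.
End Rule.

Record prm := mkprm { pu : Z; pv : Z; pf : Z; pa : Z; pb : Z; pc : Z;
  pa2 : Z; pb2 : Z; pc2 : Z; phW : Z; phE : Z; phS : Z; phN : Z; phSW : Z; phNE : Z }.

Definition triP (P : Z -> Z -> Prop) (t : tri) : Prop :=
  match t with
  | Up i j => P i j /\ P (i+1) j /\ P i (j+1)
  | Down i j => P (i+1) j /\ P i (j+1) /\ P (i+1) (j+1)
  end.

Definition hexP (p : prm) (i j : Z) : Prop :=
  (phS p <= j <= phN p /\ phW p <= i <= phE p /\ phSW p <= i + j <= phNE p).
Definition upP (pi pj s i j : Z) : Prop := pi <= i /\ pj <= j /\ i + j <= pi + pj + s.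
Definition downP (pi pj s i j : Z) : Prop := j <= pj /\ i <= pi + s /\ pi + pj <= i + j.

Definition LAo p := downP (pu p - pa p) (pv p + pa p) (pa p).
Definition LAi p := upP (pu p) (pv p - pa2 p) (pa2 p).
Definition LBi p := upP (pu p) (pv p - pf p) (pb2 p).
Definition LBo p := downP (pu p - pb p) (pv p - pf p) (pb p).
Definition LCi p := upP (pu p + pf p - pc2 p) (pv p - pf p) (pc2 p).
Definition LCo p := downP (pu p + pf p) (pv p - pf p) (pc p).

Definition Reg (p : prm) (t : tri) : Prop :=
  triP (hexP p) t /\ ~ triP (LAo p) t /\ ~ triP (LAi p) t /\ ~ triP (LBi p) t /\
  ~ triP (LBo p) t /\ ~ triP (LCi p) t /\ ~ triP (LCo p) t.

Definition prm_of (T : triad) : prm :=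
  {| pu := fst (tA T); pv := snd (tA T); pf := Z.of_nat (tf T);
     pa := Z.of_nat (ta T); pb := Z.of_nat (tb T); pc := Z.of_nat (tc T);
     pa2 := Z.of_nat (ta' T); pb2 := Z.of_nat (tb' T); pc2 := Z.of_nat (tc' T);
     phW := hW T; phE := hE T; phS := hS T; phN := hN T; phSW := hSW T; phNE := hNE T |}.

Lemma tri_in_triP (P : point -> Prop) (Q : Z -> Z -> Prop) t :
  (forall i j, P (i, j) <-> Q i j) -> (tri_in P t <-> triP Q t).
Proof.
  intros HPQ. unfold tri_in. destruct t as [i j|i j]; simpl; split.
  - intros H. repeat split; apply HPQ; apply H; auto.
  - intros [A [B C]] v Hv. destruct v as [vi vj].
    destruct Hv as [E|[E|[E|[]]]]; inversion E; subst; apply HPQ; auto.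
  - intros H. repeat split; apply HPQ; apply H; auto.
  - intros [A [B C]] v Hv. destruct v as [vi vj].
    destruct Hv as [E|[E|[E|[]]]]; inversion E; subst; apply HPQ; auto.
Qed.

Lemma triad_region_Reg (T : triad) (t : tri) :
  triad_region T t <-> Reg (prm_of T) t.
Proof.
  unfold triad_region, Reg.
  assert (E0 : tri_in (hex_pts T) t <-> triP (hexP (prm_of T)) t).
  { apply tri_in_triP. intros i j. unfold hex_pts, hexP. simpl. tauto. }
  assert (E1 : tri_in (lobeA_out T) t <-> triP (LAo (prm_of T)) t).
  { apply tri_in_triP. intros i j. unfold lobeA_out, LAo, down_pts, downP, ptA. simpl. tauto. }
  assert (E2 : tri_in (lobeA_in T) t <-> triP (LAi (prm_of T)) t).
  { apply tri_in_triP. intros i j. unfold lobeA_in, LAi, up_pts, upP, ptA. simpl. tauto. }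
  assert (E3 : tri_in (lobeB_in T) t <-> triP (LBi (prm_of T)) t).
  { apply tri_in_triP. intros i j. unfold lobeB_in, LBi, up_pts, upP, ptB. simpl. tauto. }
  assert (E4 : tri_in (lobeB_out T) t <-> triP (LBo (prm_of T)) t).
  { apply tri_in_triP. intros i j. unfold lobeB_out, LBo, down_pts, downP, ptB. simpl. tauto. }
  assert (E5 : tri_in (lobeC_in T) t <-> triP (LCi (prm_of T)) t).
  { apply tri_in_triP. intros i j. unfold lobeC_in, LCi, up_pts, upP, ptC. simpl. tauto. }
  assert (E6 : tri_in (lobeC_out T) t <-> triP (LCo (prm_of T)) t).
  { apply tri_in_triP. intros i j. unfold lobeC_out, LCo, down_pts, downP, ptC. simpl. tauto. }
  rewrite E0, <- E1, <- E2, <- E3, <- E4, <- E5, <- E6. unfold lobes. simpl.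
  split.
  - intros [H0 H]. repeat split; auto; intro; apply H; eauto 10.
  - intros [H0 [N1 [N2 [N3 [N4 [N5 N6]]]]]]. split; auto.
    intros [P [HP Ht]]. destruct HP as [E|[E|[E|[E|[E|[E|[]]]]]]]; subst; auto.
Qed.

Definition mkp (x y z a b c a2 b2 c2 g dS dE dW u v : Z) : prm :=
  {| pu := u; pv := v; pf := a2+b2+c2+g; pa := a; pb := b; pc := c; pa2 := a2; pb2 := b2; pc2 := c2;
     phW := u - a - b - dW; phE := u + (a2+b2+c2+g) + c + (dS + dE - z);
     phS := v - (a2+b2+c2+g) - b - c - dS;
     phN := v + a + (dE + dW - x); phSW := u + v - (a2+b2+c2+g) - b - (dW + dS - y);
     phNE := u + v + a + c + dE |}.

Ltac unf_all := unfold Reg, triP, hexP, LAo, LAi, LBi, LBo, LCi, LCo, upP, downP in *.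

Ltac try_with L :=
  match goal with Hn : ~ triP (L _) _ |- _ =>
    let H' := fresh "HU" in pose proof Hn as H'; unfold triP in H'; unfold L, upP, downP in H';
    simpl in H'; lia end.
Ltac try_with2 L1 L2 :=
  match goal with Hn : ~ triP (L1 _) _ |- _ =>
  match goal with Hm : ~ triP (L2 _) _ |- _ =>
    let H' := fresh "HU" in pose proof Hn as H'; unfold triP in H'; unfold L1, upP, downP in H';
    simpl in H';
    let H'' := fresh "HU" in pose proof Hm as H''; unfold triP in H''; unfold L2, upP, downP in H'';
    simpl in H''; lia end end.
Ltac lia_l := first [ lia | try_with LAo | try_with LAi | try_with LBi | try_with LBo
                          | try_with LCi | try_with LCo ].

Ltac nl L :=
  let H := fresh "HL" in
  intro H; unfold triP in H; unfold L, upP, downP in H; simpl in H; lia_l.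

Ltac solve_reg :=
  unfold Reg; split; [unfold triP, hexP; simpl; lia_l|];
  split; [nl LAo|]; split; [nl LAi|]; split; [nl LBi|]; split; [nl LBo|];
  split; [nl LCi|]; nl LCo.

Ltac dreg H :=
  let hx := fresh "hx" in let n1 := fresh "nAo" in let n2 := fresh "nAi" in
  let n3 := fresh "nBi" in let n4 := fresh "nBo" in let n5 := fresh "nCi" in let n6 := fresh "nCo" in
  destruct H as [hx [n1 [n2 [n3 [n4 [n5 n6]]]]]]; unfold triP, hexP in hx; simpl in hx.

Section Base.
Variables (a2 b2 c2 dS dE dW u v : Z).
Hypotheses (Ha2 : 0 <= a2) (Hb2 : 0 <= b2) (Hc2 : 0 <= c2) (HdS : 0 <= dS) (HdE : 0 <= dE) (HdW : 0 <= dW).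
Let f := a2 + b2 + c2 + (dS+dE+dW).
Let p := mkp (dE+dW) (dW+dS) (dS+dE) 0 0 0 a2 b2 c2 (dS+dE+dW) dS dE dW u v.
Definition bC1 i j := i - u < 0 /\ j - v >= - a2.
Definition bC2 i j := j - v < - (a2 + b2 + c2 + (dS+dE+dW)) /\ (i - u) + (j - v) < - (a2 + b2 + c2 + (dS+dE+dW)) + b2.
Definition bC3 i j := (i - u) + (j - v) >= 0 /\ i - u >= (a2 + b2 + c2 + (dS+dE+dW)) - c2.
Definition bC4 i j := j - v >= - (a2 + b2 + c2 + (dS+dE+dW)) + c2 + dE /\ (i - u) + (j - v) >= b2 + dS - (a2 + b2 + c2 + (dS+dE+dW)) + c2 + dE.
Definition bC5 i j := j - v < - (a2 + b2 + c2 + (dS+dE+dW)) + c2 + dE /\ i - u >= b2 + dS.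
Definition bR i j := bC1 i j \/ (~ bC2 i j /\ ~ bC3 i j /\ ~ bC4 i j /\ bC5 i j).
Definition bL i j := bC2 i j \/ (~ bC3 i j /\ bC4 i j).

Lemma base_H2 : forall i j, Reg p (Up i j) ->
  (isV bR bL i j -> Reg p (Down i (j-1))) /\ (isL bR bL i j -> Reg p (Down (i-1) j)) /\
  (isR bR i j -> Reg p (Down i j)).
Proof.
  intros i j H. unfold p in *. dreg H.
  unfold isV, isL, isR, bR, bL, bC1, bC2, bC3, bC4, bC5.
  split; [|split]; intro Ht; solve_reg.
Qed.

Ltac solve_ty := unfold isV, isL, isR, bR, bL, bC1, bC2, bC3, bC4, bC5; lia_l.

Lemma base_H3 : forall i j, Reg p (Down i j) ->
  (Reg p (Up i (j+1)) /\ isV bR bL i (j+1)) \/ (Reg p (Up (i+1) j) /\ isL bR bL (i+1) j) \/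
  (Reg p (Up i j) /\ isR bR i j).
Proof.
  intros i j H. unfold p in *. dreg H.
  destruct (classic (isR bR i j)) as [tR|tR];
  destruct (classic (isL bR bL (i+1) j)) as [tL|tL];
  destruct (classic (isV bR bL i (j+1))) as [tV|tV];
  pose proof tR as uR; pose proof tL as uL; pose proof tV as uV;
  unfold isV, isL, isR, bR, bL, bC1, bC2, bC3, bC4, bC5 in uR, uL, uV;
  first [ right; right; split; [solve_reg|exact tR]
        | right; left; split; [solve_reg|exact tL]
        | left; split; [solve_reg|exact tV]
        | exfalso; lia_l ].
Qed.

Lemma base_H4 : forall i j, Reg p (Down i j) ->
  ~ ((Reg p (Up i (j+1)) /\ isV bR bL i (j+1)) /\ (Reg p (Up (i+1) j) /\ isL bR bL (i+1) j)) /\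
  ~ ((Reg p (Up i (j+1)) /\ isV bR bL i (j+1)) /\ (Reg p (Up i j) /\ isR bR i j)) /\
  ~ ((Reg p (Up (i+1) j) /\ isL bR bL (i+1) j) /\ (Reg p (Up i j) /\ isR bR i j)).
Proof.
  intros i j H. unfold p in *. dreg H.
  split; [|split]; intros [[R1 T1] [R2 T2]]; dreg R1; dreg R2;
  unfold isV, isL, isR, bR, bL, bC1, bC2, bC3, bC4, bC5 in *; lia_l.
Qed.

Lemma base_tileable : tileable (Reg p).
Proof. apply (rule_tiling (Reg p) bR bL); [exact base_H2|exact base_H3|exact base_H4]. Qed.
End Base.

Definition Dm (p q : prm) (t : tri) : Prop := Reg p t /\ ~ triP (hexP q) t.

Lemma move_gen (p q : prm) (condR condL : Z -> Z -> Prop) :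
  (forall t, triP (hexP q) t -> triP (hexP p) t) ->
  (forall t, triP (hexP q) t ->
     (triP (LAo p) t <-> triP (LAo q) t) /\ (triP (LAi p) t <-> triP (LAi q) t) /\
     (triP (LBi p) t <-> triP (LBi q) t) /\ (triP (LBo p) t <-> triP (LBo q) t) /\
     (triP (LCi p) t <-> triP (LCi q) t) /\ (triP (LCo p) t <-> triP (LCo q) t)) ->
  (forall i j, Dm p q (Up i j) ->
    (isV condR condL i j -> Dm p q (Down i (j-1))) /\ (isL condR condL i j -> Dm p q (Down (i-1) j)) /\
    (isR condR i j -> Dm p q (Down i j))) ->
  (forall i j, Dm p q (Down i j) ->
    (Dm p q (Up i (j+1)) /\ isV condR condL i (j+1)) \/ (Dm p q (Up (i+1) j) /\ isL condR condL (i+1) j) \/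
    (Dm p q (Up i j) /\ isR condR i j)) ->
  (forall i j, Dm p q (Down i j) ->
    ~ ((Dm p q (Up i (j+1)) /\ isV condR condL i (j+1)) /\ (Dm p q (Up (i+1) j) /\ isL condR condL (i+1) j)) /\
    ~ ((Dm p q (Up i (j+1)) /\ isV condR condL i (j+1)) /\ (Dm p q (Up i j) /\ isR condR i j)) /\
    ~ ((Dm p q (Up (i+1) j) /\ isL condR condL (i+1) j) /\ (Dm p q (Up i j) /\ isR condR i j))) ->
  tileable (Reg q) -> tileable (Reg p).
Proof.
  intros Hsub Hlob H2 H3 H4 Tq.
  assert (HQ : forall t, Reg q t <-> Reg p t /\ triP (hexP q) t).
  { intros t. split.
    - intros Hq. pose proof Hq as [Hx _]. pose proof (Hlob t Hx) as L6.
      unfold Reg in *. split; [|exact Hx]. split; [apply Hsub; exact Hx|]. tauto.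
    - intros [Hp Hx]. pose proof (Hlob t Hx) as L6. unfold Reg in *. tauto. }
  apply (tileable_union (Reg p) (Reg q) (Dm p q)).
  - intros t. split.
    + intros Hp. destruct (classic (triP (hexP q) t)) as [Hx|Hx].
      * left. apply HQ. auto.
      * right. split; auto.
    + intros [Hq|[Hp _]]; [apply HQ in Hq; tauto|exact Hp].
  - intros t Hq [_ Hn]. apply HQ in Hq. tauto.
  - exact Tq.
  - apply (rule_tiling (Dm p q) condR condL); assumption.
Qed.

Ltac lobes_eq :=
  intros t Hhx; destruct t as [i j|i j]; unfold triP, hexP in Hhx; simpl in Hhx;
  unfold triP, LAo, LAi, LBi, LBo, LCi, LCo, upP, downP; simpl;
  repeat split; intros; lia.

Ltac hex_sub :=
  intros t Hhx; destruct t as [i j|i j]; unfold triP, hexP in *; simpl in *; lia.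

Ltac ddm H :=
  let R := fresh "Rp" in let N := fresh "nq" in
  destruct H as [R N]; dreg R; unfold triP, hexP in N; simpl in N.

Ltac solve_dm :=
  split; [solve_reg| let H := fresh "Hq" in intro H; unfold triP, hexP in H; simpl in H; lia_l].



Ltac br := first [ right; right; split; [solve_dm|assumption]
                 | right; left; split; [solve_dm|assumption]
                 | left; split; [solve_dm|assumption]
                 | exfalso; lia_l ].
Ltac hsplit P t := let h := fresh "hh" in destruct (classic (triP (hexP P) t)) as [h|h];
   unfold triP, hexP in h; simpl in h.
Ltac h3tac P i j := first [ br | hsplit P (Up i j); br
   | hsplit P (Up (i+1) j); br | hsplit P (Up i (j+1)); br
   | hsplit P (Up i j); hsplit P (Up (i+1) j); hsplit P (Up i (j+1)); br ].

Section MW.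
Variables (x y z a b c a2 b2 c2 g dS dE dW u v : Z).
Hypotheses (Hx : 1 <= x) (Hy : 0 <= y) (Hz : 0 <= z) (Ha : 0 <= a) (Hb : 0 <= b) (Hc : 0 <= c) (Ha2 : 0 <= a2) (Hb2 : 0 <= b2) (Hc2 : 0 <= c2) (Hg : 0 <= g) (HdS : 0 <= dS) (HdE : 0 <= dE) (HdW : 1 <= dW) (Hsum : dS + dE + dW = x + y + z - g) (Hsx : 0 <= dE + dW - x) (Hsy : 1 <= dW + dS - y) (Hsz : 0 <= dS + dE - z).
Let p := mkp x y z a b c a2 b2 c2 g dS dE dW u v.
Let q := mkp (x-1) y z a b c a2 b2 c2 g dS dE (dW-1) u v.
Definition cR_W (i j : Z) : Prop := (i = (u - a - b - dW)).
Definition cL_W (i j : Z) : Prop := (i + j = (u + v - (a2+b2+c2+g) - b - (dW + dS - y))).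

Lemma mv_W : tileable (Reg q) -> tileable (Reg p).
Proof.
  apply (move_gen p q cR_W cL_W).
  - unfold p, q. hex_sub.
  - unfold p, q. lobes_eq.
  - intros i j H. unfold p, q in *. ddm H. unfold isV, isL, isR, cR_W, cL_W in *.
    split; [|split]; intro Ht; solve_dm.
  - intros i j H. unfold p, q in *. ddm H.
    destruct (classic (isR cR_W i j)) as [tR|tR];
    destruct (classic (isL cR_W cL_W (i+1) j)) as [tL|tL];
    destruct (classic (isV cR_W cL_W i (j+1))) as [tV|tV];
    pose proof tR as uR; pose proof tL as uL; pose proof tV as uV;
    unfold isV, isL, isR, cR_W, cL_W in uR, uL, uV;
    h3tac (mkp x y z a b c a2 b2 c2 g dS dE dW u v) i j.
  - intros i j H. unfold p, q in *. ddm H.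
    split; [|split]; intros [[R1 T1] [R2 T2]]; ddm R1; ddm R2;
    unfold isV, isL, isR, cR_W, cL_W in *; lia_l.
Qed.
End MW.

Section ME.
Variables (x y z a b c a2 b2 c2 g dS dE dW u v : Z).
Hypotheses (Hx : 1 <= x) (Hy : 0 <= y) (Hz : 0 <= z) (Ha : 0 <= a) (Hb : 0 <= b) (Hc : 0 <= c) (Ha2 : 0 <= a2) (Hb2 : 0 <= b2) (Hc2 : 0 <= c2) (Hg : 0 <= g) (HdS : 0 <= dS) (HdE : 1 <= dE) (HdW : 0 <= dW) (Hsum : dS + dE + dW = x + y + z - g) (Hsx : 0 <= dE + dW - x) (Hsy : 0 <= dW + dS - y) (Hsz : 1 <= dS + dE - z).
Let p := mkp x y z a b c a2 b2 c2 g dS dE dW u v.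
Let q := mkp (x-1) y z a b c a2 b2 c2 g dS (dE-1) dW u v.
Definition cR_E (i j : Z) : Prop := ((i = (u + (a2+b2+c2+g) + c + (dS + dE - z)) - 1) /\ ~ (i + j = (u + v + a + c + dE) - 1)).
Definition cL_E (i j : Z) : Prop := (i + j = (u + v + a + c + dE) - 1).

Lemma mv_E : tileable (Reg q) -> tileable (Reg p).
Proof.
  apply (move_gen p q cR_E cL_E).
  - unfold p, q. hex_sub.
  - unfold p, q. lobes_eq.
  - intros i j H. unfold p, q in *. ddm H. unfold isV, isL, isR, cR_E, cL_E in *.
    split; [|split]; intro Ht; solve_dm.
  - intros i j H. unfold p, q in *. ddm H.
    destruct (classic (isR cR_E i j)) as [tR|tR];
    destruct (classic (isL cR_E cL_E (i+1) j)) as [tL|tL];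
    destruct (classic (isV cR_E cL_E i (j+1))) as [tV|tV];
    pose proof tR as uR; pose proof tL as uL; pose proof tV as uV;
    unfold isV, isL, isR, cR_E, cL_E in uR, uL, uV;
    h3tac (mkp x y z a b c a2 b2 c2 g dS dE dW u v) i j.
  - intros i j H. unfold p, q in *. ddm H.
    split; [|split]; intros [[R1 T1] [R2 T2]]; ddm R1; ddm R2;
    unfold isV, isL, isR, cR_E, cL_E in *; lia_l.
Qed.
End ME.

Section MNWc.
Variables (x y z a b c a2 b2 c2 g dS dE dW u v : Z).
Hypotheses (Hx : 0 <= x) (Hy : 1 <= y) (Hz : 0 <= z) (Ha : 0 <= a) (Hb : 0 <= b) (Hc : 0 <= c) (Ha2 : 0 <= a2) (Hb2 : 0 <= b2) (Hc2 : 0 <= c2) (Hg : 0 <= g) (HdS : 0 <= dS) (HdE : 0 <= dE) (HdW : 1 <= dW) (Hsum : dS + dE + dW = x + y + z - g) (Hsx : 1 <= dE + dW - x) (Hsy : 0 <= dW + dS - y) (Hsz : 0 <= dS + dE - z).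
Let p := mkp x y z a b c a2 b2 c2 g dS dE dW u v.
Let q := mkp x (y-1) z a b c a2 b2 c2 g dS dE (dW-1) u v.
Definition cR_NWc (i j : Z) : Prop := False.
Definition cL_NWc (i j : Z) : Prop := ((j = (v + a + (dE + dW - x)) - 1) /\ ~ (i = (u - a - b - dW))).

Lemma mv_NWc : tileable (Reg q) -> tileable (Reg p).
Proof.
  apply (move_gen p q cR_NWc cL_NWc).
  - unfold p, q. hex_sub.
  - unfold p, q. lobes_eq.
  - intros i j H. unfold p, q in *. ddm H. unfold isV, isL, isR, cR_NWc, cL_NWc in *.
    split; [|split]; intro Ht; solve_dm.
  - intros i j H. unfold p, q in *. ddm H.
    destruct (classic (isR cR_NWc i j)) as [tR|tR];
    destruct (classic (isL cR_NWc cL_NWc (i+1) j)) as [tL|tL];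
    destruct (classic (isV cR_NWc cL_NWc i (j+1))) as [tV|tV];
    pose proof tR as uR; pose proof tL as uL; pose proof tV as uV;
    unfold isV, isL, isR, cR_NWc, cL_NWc in uR, uL, uV;
    h3tac (mkp x y z a b c a2 b2 c2 g dS dE dW u v) i j.
  - intros i j H. unfold p, q in *. ddm H.
    split; [|split]; intros [[R1 T1] [R2 T2]]; ddm R1; ddm R2;
    unfold isV, isL, isR, cR_NWc, cL_NWc in *; lia_l.
Qed.
End MNWc.

Section MSEc.
Variables (x y z a b c a2 b2 c2 g dS dE dW u v : Z).
Hypotheses (Hx : 0 <= x) (Hy : 1 <= y) (Hz : 0 <= z) (Ha : 0 <= a) (Hb : 0 <= b) (Hc : 0 <= c) (Ha2 : 0 <= a2) (Hb2 : 0 <= b2) (Hc2 : 0 <= c2) (Hg : 0 <= g) (HdS : 1 <= dS) (HdE : 0 <= dE) (HdW : 0 <= dW) (Hsum : dS + dE + dW = x + y + z - g) (Hsx : 0 <= dE + dW - x) (Hsy : 0 <= dW + dS - y) (Hsz : 1 <= dS + dE - z).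
Let p := mkp x y z a b c a2 b2 c2 g dS dE dW u v.
Let q := mkp x (y-1) z a b c a2 b2 c2 g (dS-1) dE dW u v.
Definition cR_SEc (i j : Z) : Prop := False.
Definition cL_SEc (i j : Z) : Prop := (j = (v - (a2+b2+c2+g) - b - c - dS)).

Lemma mv_SEc : tileable (Reg q) -> tileable (Reg p).
Proof.
  apply (move_gen p q cR_SEc cL_SEc).
  - unfold p, q. hex_sub.
  - unfold p, q. lobes_eq.
  - intros i j H. unfold p, q in *. ddm H. unfold isV, isL, isR, cR_SEc, cL_SEc in *.
    split; [|split]; intro Ht; solve_dm.
  - intros i j H. unfold p, q in *. ddm H.
    destruct (classic (isR cR_SEc i j)) as [tR|tR];
    destruct (classic (isL cR_SEc cL_SEc (i+1) j)) as [tL|tL];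
    destruct (classic (isV cR_SEc cL_SEc i (j+1))) as [tV|tV];
    pose proof tR as uR; pose proof tL as uL; pose proof tV as uV;
    unfold isV, isL, isR, cR_SEc, cL_SEc in uR, uL, uV;
    h3tac (mkp x y z a b c a2 b2 c2 g dS dE dW u v) i j.
  - intros i j H. unfold p, q in *. ddm H.
    split; [|split]; intros [[R1 T1] [R2 T2]]; ddm R1; ddm R2;
    unfold isV, isL, isR, cR_SEc, cL_SEc in *; lia_l.
Qed.
End MSEc.

Section MNEc.
Variables (x y z a b c a2 b2 c2 g dS dE dW u v : Z).
Hypotheses (Hx : 0 <= x) (Hy : 0 <= y) (Hz : 1 <= z) (Ha : 0 <= a) (Hb : 0 <= b) (Hc : 0 <= c) (Ha2 : 0 <= a2) (Hb2 : 0 <= b2) (Hc2 : 0 <= c2) (Hg : 0 <= g) (HdS : 0 <= dS) (HdE : 1 <= dE) (HdW : 0 <= dW) (Hsum : dS + dE + dW = x + y + z - g) (Hsx : 1 <= dE + dW - x) (Hsy : 0 <= dW + dS - y) (Hsz : 0 <= dS + dE - z).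
Let p := mkp x y z a b c a2 b2 c2 g dS dE dW u v.
Let q := mkp x y (z-1) a b c a2 b2 c2 g dS (dE-1) dW u v.
Definition cR_NEc (i j : Z) : Prop := ((j = (v + a + (dE + dW - x)) - 1) /\ ~ (i + j = (u + v + a + c + dE) - 1)).
Definition cL_NEc (i j : Z) : Prop := False.

Lemma mv_NEc : tileable (Reg q) -> tileable (Reg p).
Proof.
  apply (move_gen p q cR_NEc cL_NEc).
  - unfold p, q. hex_sub.
  - unfold p, q. lobes_eq.
  - intros i j H. unfold p, q in *. ddm H. unfold isV, isL, isR, cR_NEc, cL_NEc in *.
    split; [|split]; intro Ht; solve_dm.
  - intros i j H. unfold p, q in *. ddm H.
    destruct (classic (isR cR_NEc i j)) as [tR|tR];
    destruct (classic (isL cR_NEc cL_NEc (i+1) j)) as [tL|tL];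
    destruct (classic (isV cR_NEc cL_NEc i (j+1))) as [tV|tV];
    pose proof tR as uR; pose proof tL as uL; pose proof tV as uV;
    unfold isV, isL, isR, cR_NEc, cL_NEc in uR, uL, uV;
    h3tac (mkp x y z a b c a2 b2 c2 g dS dE dW u v) i j.
  - intros i j H. unfold p, q in *. ddm H.
    split; [|split]; intros [[R1 T1] [R2 T2]]; ddm R1; ddm R2;
    unfold isV, isL, isR, cR_NEc, cL_NEc in *; lia_l.
Qed.
End MNEc.

Section MSWc.
Variables (x y z a b c a2 b2 c2 g dS dE dW u v : Z).
Hypotheses (Hx : 0 <= x) (Hy : 0 <= y) (Hz : 1 <= z) (Ha : 0 <= a) (Hb : 0 <= b) (Hc : 0 <= c) (Ha2 : 0 <= a2) (Hb2 : 0 <= b2) (Hc2 : 0 <= c2) (Hg : 0 <= g) (HdS : 1 <= dS) (HdE : 0 <= dE) (HdW : 0 <= dW) (Hsum : dS + dE + dW = x + y + z - g) (Hsx : 0 <= dE + dW - x) (Hsy : 1 <= dW + dS - y) (Hsz : 0 <= dS + dE - z).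
Let p := mkp x y z a b c a2 b2 c2 g dS dE dW u v.
Let q := mkp x y (z-1) a b c a2 b2 c2 g (dS-1) dE dW u v.
Definition cR_SWc (i j : Z) : Prop := (j = (v - (a2+b2+c2+g) - b - c - dS)).
Definition cL_SWc (i j : Z) : Prop := False.

Lemma mv_SWc : tileable (Reg q) -> tileable (Reg p).
Proof.
  apply (move_gen p q cR_SWc cL_SWc).
  - unfold p, q. hex_sub.
  - unfold p, q. lobes_eq.
  - intros i j H. unfold p, q in *. ddm H. unfold isV, isL, isR, cR_SWc, cL_SWc in *.
    split; [|split]; intro Ht; solve_dm.
  - intros i j H. unfold p, q in *. ddm H.
    destruct (classic (isR cR_SWc i j)) as [tR|tR];
    destruct (classic (isL cR_SWc cL_SWc (i+1) j)) as [tL|tL];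
    destruct (classic (isV cR_SWc cL_SWc i (j+1))) as [tV|tV];
    pose proof tR as uR; pose proof tL as uL; pose proof tV as uV;
    unfold isV, isL, isR, cR_SWc, cL_SWc in uR, uL, uV;
    h3tac (mkp x y z a b c a2 b2 c2 g dS dE dW u v) i j.
  - intros i j H. unfold p, q in *. ddm H.
    split; [|split]; intros [[R1 T1] [R2 T2]]; ddm R1; ddm R2;
    unfold isV, isL, isR, cR_SWc, cL_SWc in *; lia_l.
Qed.
End MSWc.

Section MLa.
Variables (x y z a b c a2 b2 c2 g dS dE dW u v : Z).
Hypotheses (Hx : 0 <= x) (Hy : 0 <= y) (Hz : 0 <= z) (Ha : 1 <= a) (Hb : 0 <= b) (Hc : 0 <= c) (Ha2 : 0 <= a2) (Hb2 : 0 <= b2) (Hc2 : 0 <= c2) (Hg : 0 <= g) (HdS : 0 <= dS) (HdE : 0 <= dE) (HdW : 0 <= dW) (Hsum : dS + dE + dW = x + y + z - g) (Hsx : dE + dW - x = 0) (Hsy : 0 <= dW + dS - y) (Hsz : 0 <= dS + dE - z).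
Let p := mkp x y z a b c a2 b2 c2 g dS dE dW u v.
Let q := mkp x y z (a-1) b c a2 b2 c2 g dS dE dW u v.
Definition cR_La (i j : Z) : Prop := ((j = (v + a + (dE + dW - x)) - 1) /\ ~ (i = (u - a - b - dW)) /\ ~ (i + j = (u + v + a + c + dE) - 1) /\ i >= u).
Definition cL_La (i j : Z) : Prop := ((j = (v + a + (dE + dW - x)) - 1) /\ ~ (i = (u - a - b - dW)) /\ ~ (i + j = (u + v + a + c + dE) - 1) /\ i < u).

Lemma mv_La : tileable (Reg q) -> tileable (Reg p).
Proof.
  apply (move_gen p q cR_La cL_La).
  - unfold p, q. hex_sub.
  - unfold p, q. lobes_eq.
  - intros i j H. unfold p, q in *. ddm H. unfold isV, isL, isR, cR_La, cL_La in *.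
    split; [|split]; intro Ht; solve_dm.
  - intros i j H. unfold p, q in *. ddm H.
    destruct (classic (isR cR_La i j)) as [tR|tR];
    destruct (classic (isL cR_La cL_La (i+1) j)) as [tL|tL];
    destruct (classic (isV cR_La cL_La i (j+1))) as [tV|tV];
    pose proof tR as uR; pose proof tL as uL; pose proof tV as uV;
    unfold isV, isL, isR, cR_La, cL_La in uR, uL, uV;
    h3tac (mkp x y z a b c a2 b2 c2 g dS dE dW u v) i j.
  - intros i j H. unfold p, q in *. ddm H.
    split; [|split]; intros [[R1 T1] [R2 T2]]; ddm R1; ddm R2;
    unfold isV, isL, isR, cR_La, cL_La in *; lia_l.
Qed.
End MLa.

Section MLb.
Variables (x y z a b c a2 b2 c2 g dS dE dW u v : Z).
Hypotheses (Hx : 0 <= x) (Hy : 0 <= y) (Hz : 0 <= z) (Ha : 0 <= a) (Hb : 1 <= b) (Hc : 0 <= c) (Ha2 : 0 <= a2) (Hb2 : 0 <= b2) (Hc2 : 0 <= c2) (Hg : 0 <= g) (HdS : 0 <= dS) (HdE : 0 <= dE) (HdW : 0 <= dW) (Hsum : dS + dE + dW = x + y + z - g) (Hsx : 0 <= dE + dW - x) (Hsy : dW + dS - y = 0) (Hsz : 0 <= dS + dE - z).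
Let p := mkp x y z a b c a2 b2 c2 g dS dE dW u v.
Let q := mkp x y z a (b-1) c a2 b2 c2 g dS dE dW u v.
Definition cR_Lb (i j : Z) : Prop := ((i = (u - a - b - dW)) \/ (j = (v - (a2+b2+c2+g) - b - c - dS))).
Definition cL_Lb (i j : Z) : Prop := ((i + j = (u + v - (a2+b2+c2+g) - b - (dW + dS - y))) /\ j >= v - (a2+b2+c2+g)).

Lemma mv_Lb : tileable (Reg q) -> tileable (Reg p).
Proof.
  apply (move_gen p q cR_Lb cL_Lb).
  - unfold p, q. hex_sub.
  - unfold p, q. lobes_eq.
  - intros i j H. unfold p, q in *. ddm H. unfold isV, isL, isR, cR_Lb, cL_Lb in *.
    split; [|split]; intro Ht; solve_dm.
  - intros i j H. unfold p, q in *. ddm H.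
    destruct (classic (isR cR_Lb i j)) as [tR|tR];
    destruct (classic (isL cR_Lb cL_Lb (i+1) j)) as [tL|tL];
    destruct (classic (isV cR_Lb cL_Lb i (j+1))) as [tV|tV];
    pose proof tR as uR; pose proof tL as uL; pose proof tV as uV;
    unfold isV, isL, isR, cR_Lb, cL_Lb in uR, uL, uV;
    h3tac (mkp x y z a b c a2 b2 c2 g dS dE dW u v) i j.
  - intros i j H. unfold p, q in *. ddm H.
    split; [|split]; intros [[R1 T1] [R2 T2]]; ddm R1; ddm R2;
    unfold isV, isL, isR, cR_Lb, cL_Lb in *; lia_l.
Qed.
End MLb.

Section MLc.
Variables (x y z a b c a2 b2 c2 g dS dE dW u v : Z).
Hypotheses (Hx : 0 <= x) (Hy : 0 <= y) (Hz : 0 <= z) (Ha : 0 <= a) (Hb : 0 <= b) (Hc : 1 <= c) (Ha2 : 0 <= a2) (Hb2 : 0 <= b2) (Hc2 : 0 <= c2) (Hg : 0 <= g) (HdS : 0 <= dS) (HdE : 0 <= dE) (HdW : 0 <= dW) (Hsum : dS + dE + dW = x + y + z - g) (Hsx : 0 <= dE + dW - x) (Hsy : 0 <= dW + dS - y) (Hsz : dS + dE - z = 0).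
Let p := mkp x y z a b c a2 b2 c2 g dS dE dW u v.
Let q := mkp x y z a b (c-1) a2 b2 c2 g dS dE dW u v.
Definition cR_Lc (i j : Z) : Prop := ((i = (u + (a2+b2+c2+g) + c + (dS + dE - z)) - 1) /\ j >= v - (a2+b2+c2+g) /\ ~ (i + j = (u + v + a + c + dE) - 1) /\ ~ (j = (v - (a2+b2+c2+g) - b - c - dS))).
Definition cL_Lc (i j : Z) : Prop := ((i + j = (u + v + a + c + dE) - 1) \/ (j = (v - (a2+b2+c2+g) - b - c - dS))).

Lemma mv_Lc : tileable (Reg q) -> tileable (Reg p).
Proof.
  apply (move_gen p q cR_Lc cL_Lc).
  - unfold p, q. hex_sub.
  - unfold p, q. lobes_eq.
  - intros i j H. unfold p, q in *. ddm H. unfold isV, isL, isR, cR_Lc, cL_Lc in *.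
    split; [|split]; intro Ht; solve_dm.
  - intros i j H. unfold p, q in *. ddm H.
    destruct (classic (isR cR_Lc i j)) as [tR|tR];
    destruct (classic (isL cR_Lc cL_Lc (i+1) j)) as [tL|tL];
    destruct (classic (isV cR_Lc cL_Lc i (j+1))) as [tV|tV];
    pose proof tR as uR; pose proof tL as uL; pose proof tV as uV;
    unfold isV, isL, isR, cR_Lc, cL_Lc in uR, uL, uV;
    h3tac (mkp x y z a b c a2 b2 c2 g dS dE dW u v) i j.
  - intros i j H. unfold p, q in *. ddm H.
    split; [|split]; intros [[R1 T1] [R2 T2]]; ddm R1; ddm R2;
    unfold isV, isL, isR, cR_Lc, cL_Lc in *; lia_l.
Qed.
End MLc.

Lemma suff_param : forall (n : nat) (x y z a b c a2 b2 c2 g dS dE dW u v : Z),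
  0 <= x -> 0 <= y -> 0 <= z -> 0 <= a -> 0 <= b -> 0 <= c -> 0 <= a2 -> 0 <= b2 -> 0 <= c2 ->
  0 <= g -> 0 <= dS -> 0 <= dE -> 0 <= dW -> dS + dE + dW = x + y + z - g ->
  0 <= dE + dW - x -> 0 <= dW + dS - y -> 0 <= dS + dE - z ->
  (Z.to_nat (x + y + z + a + b + c) <= n)%nat ->
  tileable (Reg (mkp x y z a b c a2 b2 c2 g dS dE dW u v)).
Proof.
  induction n as [|n IH]; intros x y z a b c a2 b2 c2 g dS dE dW u v
    Hx Hy Hz Ha Hb Hc Ha2 Hb2 Hc2 Hg HdS HdE HdW Hsum Hsx Hsy Hsz Hn.
  - assert (x = 0) by lia. assert (y = 0) by lia. assert (z = 0) by lia.
    assert (a = 0) by lia. assert (b = 0) by lia. assert (c = 0) by lia.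
    assert (dS = 0) by lia. assert (dE = 0) by lia. assert (dW = 0) by lia. assert (g = 0) by lia.
    subst. apply (base_tileable a2 b2 c2 0 0 0 u v); lia.
  - destruct (classic (1 <= x /\ 1 <= dW /\ 1 <= dW + dS - y)) as [C|C1].
    { apply (mv_W x y z a b c a2 b2 c2 g dS dE dW u v); try lia.
      apply IH; lia. }
    destruct (classic (1 <= x /\ 1 <= dE /\ 1 <= dS + dE - z)) as [C|C2].
    { apply (mv_E x y z a b c a2 b2 c2 g dS dE dW u v); try lia.
      apply IH; lia. }
    destruct (classic (1 <= y /\ 1 <= dW /\ 1 <= dE + dW - x)) as [C|C3].
    { apply (mv_NWc x y z a b c a2 b2 c2 g dS dE dW u v); try lia.
      apply IH; lia. }
    destruct (classic (1 <= y /\ 1 <= dS /\ 1 <= dS + dE - z)) as [C|C4].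
    { apply (mv_SEc x y z a b c a2 b2 c2 g dS dE dW u v); try lia.
      apply IH; lia. }
    destruct (classic (1 <= z /\ 1 <= dE /\ 1 <= dE + dW - x)) as [C|C5].
    { apply (mv_NEc x y z a b c a2 b2 c2 g dS dE dW u v); try lia.
      apply IH; lia. }
    destruct (classic (1 <= z /\ 1 <= dS /\ 1 <= dW + dS - y)) as [C|C6].
    { apply (mv_SWc x y z a b c a2 b2 c2 g dS dE dW u v); try lia.
      apply IH; lia. }
    assert (Sx : dE + dW - x = 0) by lia.
    assert (Sy : dW + dS - y = 0) by lia.
    assert (Sz : dS + dE - z = 0) by lia.
    destruct (classic (1 <= a)) as [C|C7].
    { apply (mv_La x y z a b c a2 b2 c2 g dS dE dW u v); try lia.
      apply IH; lia. }
    destruct (classic (1 <= b)) as [C|C8].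
    { apply (mv_Lb x y z a b c a2 b2 c2 g dS dE dW u v); try lia.
      apply IH; lia. }
    destruct (classic (1 <= c)) as [C|C9].
    { apply (mv_Lc x y z a b c a2 b2 c2 g dS dE dW u v); try lia.
      apply IH; lia. }
    assert (x = dE + dW) by lia. assert (y = dW + dS) by lia. assert (z = dS + dE) by lia.
    assert (a = 0) by lia. assert (b = 0) by lia. assert (c = 0) by lia.
    assert (g = dS + dE + dW) by lia.
    subst. apply (base_tileable a2 b2 c2 dS dE dW u v); lia.
Qed.

Lemma is_triad_unfold (T : triad) : is_triad T ->
  (tf T >= ta' T + tb' T + tc' T)%nat /\
  hNE T - hN T - hW T = Z.of_nat (tx T) + Z.of_nat (ta T) + Z.of_nat (tb T) + Z.of_nat (tc T) /\
  hN T + hE T - hNE T = Z.of_nat (ty T) + Z.of_nat (ta' T) + Z.of_nat (tb' T) + Z.of_nat (tc' T) /\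
  hNE T - hE T - hS T = Z.of_nat (tz T) + Z.of_nat (ta T) + Z.of_nat (tb T) + Z.of_nat (tc T) /\
  hE T - hSW T + hS T = Z.of_nat (tx T) + Z.of_nat (ta' T) + Z.of_nat (tb' T) + Z.of_nat (tc' T) /\
  hSW T - hW T - hS T = Z.of_nat (ty T) + Z.of_nat (ta T) + Z.of_nat (tb T) + Z.of_nat (tc T) /\
  hN T - hSW T + hW T = Z.of_nat (tz T) + Z.of_nat (ta' T) + Z.of_nat (tb' T) + Z.of_nat (tc' T) /\
  (forall P, In P (lobes T) -> forall v, P v -> hex_pts T v).
Proof.
  unfold is_triad. cbv zeta. intros (H0 & H1 & H2 & H3 & H4 & H5 & H6 & H7).
  rewrite !Nat2Z.inj_add in *. split; [exact H0|]. repeat (split; [lia|]). exact H7.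
Qed.

Lemma triad_slacks (T : triad) : is_triad T ->
  let u := fst (tA T) in let v := snd (tA T) in
  let f := Z.of_nat (tf T) in let a := Z.of_nat (ta T) in let b := Z.of_nat (tb T) in
  let c := Z.of_nat (tc T) in
  v + a <= hN T /\ hSW T <= u - b + (v - f) /\ u + f + c <= hE T.
Proof.
  intros HT u v f a b c. apply is_triad_unfold in HT.
  destruct HT as (_ & _ & _ & _ & _ & _ & _ & Hl).
  split; [|split].
  - assert (Hm : hex_pts T (u - a, v + a)).
    { apply (Hl (lobeA_out T)); [simpl; tauto|].
      unfold lobeA_out, down_pts, ptA. simpl. subst u v a. lia. }
    unfold hex_pts in Hm. simpl in Hm. lia.
  - assert (Hm : hex_pts T (u - b, v - f)).
    { apply (Hl (lobeB_out T)); [simpl; tauto|].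
      unfold lobeB_out, down_pts, ptB. simpl. subst u v b f. lia. }
    unfold hex_pts in Hm. simpl in Hm. lia.
  - assert (Hm : hex_pts T (u + f + c, v - f)).
    { apply (Hl (lobeC_out T)); [simpl; tauto|].
      unfold lobeC_out, down_pts, ptC. simpl. subst u v c f. lia. }
    unfold hex_pts in Hm. simpl in Hm. lia.
Qed.

Lemma suff_triad (T : triad) : is_triad T ->
  0 <= S_depth T -> 0 <= NE_depth T -> 0 <= NW_depth T -> tileable (triad_region T).
Proof.
  intros HT H1 H2 H3.
  pose proof (triad_slacks T HT) as Sl. simpl in Sl.
  apply is_triad_unfold in HT.
  destruct HT as (Hf & E1 & E2 & E3 & E4 & E5 & E6 & _).
  unfold S_depth, NE_depth, NW_depth, ptA, ptB in *. simpl in *.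
  set (u := fst (tA T)) in *. set (v := snd (tA T)) in *.
  set (x := Z.of_nat (tx T)) in *. set (y := Z.of_nat (ty T)) in *. set (z := Z.of_nat (tz T)) in *.
  set (a := Z.of_nat (ta T)) in *. set (b := Z.of_nat (tb T)) in *. set (c := Z.of_nat (tc T)) in *.
  set (a2 := Z.of_nat (ta' T)) in *. set (b2 := Z.of_nat (tb' T)) in *. set (c2 := Z.of_nat (tc' T)) in *.
  set (f := Z.of_nat (tf T)) in *.
  assert (Hfg : a2 + b2 + c2 <= f) by (subst a2 b2 c2 f; lia).
  assert (Hp : prm_of T = mkp x y z a b c a2 b2 c2 (f - a2 - b2 - c2)
            (v - f - hS T - b - c) (hNE T - (u + v) - a - c) (u - hW T - a - b) u v).
  { unfold prm_of, mkp. fold u v a b c a2 b2 c2 f. f_equal; lia. }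
  apply (tileable_ext (Reg (prm_of T))).
  { intros t. rewrite triad_region_Reg. tauto. }
  rewrite Hp.
  apply (suff_param (Z.to_nat (x + y + z + a + b + c))); try lia.
  all: subst x y z a b c a2 b2 c2 f; lia.
Qed.

Definition dec (P : Prop) : bool := if excluded_middle_informative P then true else false.
Lemma dec_true (P : Prop) : dec P = true <-> P.
Proof. unfold dec. destruct (excluded_middle_informative P); split; auto; discriminate. Qed.
Lemma dec_false (P : Prop) : dec P = false <-> ~ P.
Proof. unfold dec. destruct (excluded_middle_informative P); split; auto; try discriminate; tauto. Qed.

Lemma dec_t (P : Prop) : dec P = true -> P.
Proof. apply dec_true. Qed.
Lemma dec_f (P : Prop) : dec P = false -> ~ P.
Proof. apply dec_false. Qed.

Ltac dd E X := destruct (dec X) eqn:E; [apply dec_t in E | apply dec_f in E].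

Fixpoint zrange (lo : Z) (n : nat) : list Z :=
  match n with O => [] | S n' => lo :: zrange (lo + 1) n' end.

Lemma in_zrange lo n i : In i (zrange lo n) <-> lo <= i < lo + Z.of_nat n.
Proof.
  revert lo. induction n as [|n IH]; intros lo; simpl.
  - lia.
  - rewrite IH. lia.
Qed.

Lemma NoDup_zrange lo n : NoDup (zrange lo n).
Proof.
  revert lo. induction n as [|n IH]; intros lo; simpl; constructor; auto.
  rewrite in_zrange. lia.
Qed.

Definition cnt (P : Z -> Prop) (lo : Z) (n : nat) : nat :=
  length (filter (fun i => dec (P i)) (zrange lo n)).

Lemma cnt_S P lo n : cnt P lo (S n) = ((if dec (P lo) then 1 else 0) + cnt P (lo + 1) n)%nat.
Proof. unfold cnt. simpl. destruct (dec (P lo)); reflexivity. Qed.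

Lemma cnt_ext (P Q : Z -> Prop) lo n :
  (forall i, lo <= i < lo + Z.of_nat n -> (P i <-> Q i)) -> cnt P lo n = cnt Q lo n.
Proof.
  revert lo. induction n as [|n IH]; intros lo H; [reflexivity|].
  rewrite !cnt_S. rewrite (IH (lo+1)) by (intros i Hi; apply H; lia).
  f_equal. specialize (H lo ltac:(lia)).
  destruct (dec (P lo)) eqn:E1; destruct (dec (Q lo)) eqn:E2; auto.
  - apply dec_t in E1. apply dec_f in E2. tauto.
  - apply dec_f in E1. apply dec_t in E2. tauto.
Qed.

Lemma cnt_split (P Q : Z -> Prop) lo n :
  cnt P lo n = (cnt (fun i => P i /\ Q i) lo n + cnt (fun i => P i /\ ~ Q i) lo n)%nat.
Proof.
  revert lo. induction n as [|n IH]; intros lo; [reflexivity|].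
  rewrite !cnt_S. rewrite (IH (lo+1)).
  dd E1 (P lo); dd E2 (P lo /\ Q lo); dd E3 (P lo /\ ~ Q lo); try lia; tauto.
Qed.

Lemma cnt_interval (al be lo : Z) (n : nat) :
  Z.of_nat (cnt (fun i => al <= i <= be) lo n) =
  Z.max 0 (Z.min be (lo + Z.of_nat n - 1) - Z.max al lo + 1).
Proof.
  revert lo. induction n as [|n IH]; intros lo.
  - unfold cnt. simpl. lia.
  - rewrite cnt_S. rewrite Nat2Z.inj_add. rewrite IH. rewrite Nat2Z.inj_succ.
    destruct (dec (al <= lo <= be)) eqn:E; [apply dec_t in E|apply dec_f in E];
    change (Z.of_nat 1) with 1; change (Z.of_nat 0) with 0; lia.
Qed.


Definition zsum (f : Z -> Z) (l : list Z) : Z := fold_right (fun k acc => f k + acc) 0 l.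

Lemma zsum_le f g l : (forall k, In k l -> f k <= g k) -> zsum f l <= zsum g l.
Proof.
  induction l as [|k l IH]; simpl; intros H; [lia|].
  specialize (IH (fun k' Hk => H k' (or_intror Hk))). specialize (H k (or_introl eq_refl)). lia.
Qed.

Lemma zsum_ext f g l : (forall k, In k l -> f k = g k) -> zsum f l = zsum g l.
Proof.
  induction l as [|k l IH]; simpl; intros H; [lia|].
  rewrite (IH (fun k' Hk => H k' (or_intror Hk))), (H k (or_introl eq_refl)). lia.
Qed.

Lemma zsum_lin f g h l :
  zsum (fun k => f k + 1 - g k - h k) l = zsum f l + Z.of_nat (length l) - zsum g l - zsum h l.
Proof. induction l as [|k l IH]; simpl; lia. Qed.

Lemma zsum_cnt (P : Z -> Prop) lo n :
  zsum (fun k => if dec (P k) then 1 else 0) (zrange lo n) = Z.of_nat (cnt P lo n).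
Proof.
  revert lo. induction n as [|n IH]; intros lo; [reflexivity|].
  simpl zrange. simpl zsum. fold (zsum (fun k => if dec (P k) then 1 else 0) (zrange (lo+1) n)).
  rewrite IH, cnt_S, Nat2Z.inj_add. destruct (dec (P lo)); simpl; lia.
Qed.

Lemma list_sum_zsum (g : Z -> nat) l :
  Z.of_nat (list_sum (map g l)) = zsum (fun k => Z.of_nat (g k)) l.
Proof. induction l as [|k l IH]; simpl; [reflexivity|]. rewrite Nat2Z.inj_add, IH. reflexivity. Qed.

Lemma length_zrange lo n : length (zrange lo n) = n.
Proof. revert lo; induction n; simpl; auto. Qed.

Lemma dec_iff (P Q : Prop) : (P <-> Q) -> dec P = dec Q.
Proof.
  intros H. destruct (dec P) eqn:E1; destruct (dec Q) eqn:E2; auto.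
  - apply dec_t in E1. apply dec_f in E2. tauto.
  - apply dec_f in E1. apply dec_t in E2. tauto.
Qed.

Lemma cnt_int_le al be al' be' lo n : al - 1 <= al' -> be' <= be ->
  Z.of_nat (cnt (fun i => al' <= i <= be') lo n) <= Z.of_nat (cnt (fun i => al <= i <= be) lo n) + 1.
Proof. intros. rewrite !cnt_interval. lia. Qed.

Lemma cnt_int_shift al be lo n : lo <= al - 1 -> be <= lo + Z.of_nat n - 1 ->
  Z.of_nat (cnt (fun i => al - 1 <= i <= be) lo n) =
  Z.of_nat (cnt (fun i => al <= i <= be) lo n) + (if dec (al - 1 <= be) then 1 else 0).
Proof.
  intros. rewrite !cnt_interval. dd E (al - 1 <= be); lia.
Qed.

Lemma adj_sym t u : adjacent t u -> adjacent u t.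
Proof.
  intros [Hne [v [w [Hvw [A [B [C D]]]]]]]. split; [intro E; apply Hne; auto|].
  exists v, w. tauto.
Qed.

Lemma adj_up i j t : adjacent (Up i j) t ->
  t = Down i j \/ t = Down (i-1) j \/ t = Down i (j-1).
Proof.
  intros [Hne [v [w [Hvw [A [B [C D]]]]]]].
  destruct t as [i' j'|i' j']; simpl in *.
  - exfalso. apply Hne.
    assert (i = i' /\ j = j').
    { destruct A as [A|[A|[A|[]]]]; destruct B as [B|[B|[B|[]]]];
      destruct C as [C|[C|[C|[]]]]; destruct D as [D|[D|[D|[]]]]; subst v w;
      try (exfalso; apply Hvw; reflexivity);
      repeat match goal with H : (_,_) = (_,_) |- _ => injection H; clear H; intros end;
      lia. }
    destruct H; subst; reflexivity.
  - assert ((i' = i /\ j' = j) \/ (i' = i - 1 /\ j' = j) \/ (i' = i /\ j' = j - 1)).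
    { destruct A as [A|[A|[A|[]]]]; destruct B as [B|[B|[B|[]]]];
      destruct C as [C|[C|[C|[]]]]; destruct D as [D|[D|[D|[]]]]; subst v w;
      try (exfalso; apply Hvw; reflexivity);
      repeat match goal with H : (_,_) = (_,_) |- _ => injection H; clear H; intros end;
      lia. }
    destruct H as [[E1 E2]|[[E1 E2]|[E1 E2]]]; subst; auto.
Qed.

Section Count.
Variable R : region.
Variable L : tri * tri -> Prop.
Hypothesis HL : lozenge_tiling R L.

Lemma partner_ex : exists pf : tri -> tri, forall u, R u -> L (u, pf u) \/ L (pf u, u).
Proof.
  assert (H : forall t, exists d, R t -> L (t, d) \/ L (d, t)).
  { intros t. destruct (classic (R t)) as [Ht|Ht].
    - destruct HL as [_ H2]. destruct (H2 t Ht) as [p [[Hp Hs] _]].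
      destruct p as [p1 p2]. simpl in Hs. destruct Hs as [E|E]; subst.
      + exists p2. auto.
      + exists p1. auto.
    - exists t. tauto. }
  exists (fun t => proj1_sig (constructive_indefinite_description _ (H t))).
  intros u Hu. destruct (constructive_indefinite_description _ (H u)) as [d Hd]. simpl. auto.
Qed.

Variable pf : tri -> tri.
Hypothesis Hpf : forall u, R u -> L (u, pf u) \/ L (pf u, u).

Lemma pf_prop i k : R (Up i k) -> R (pf (Up i k)) /\
  (pf (Up i k) = Down i k \/ pf (Up i k) = Down (i-1) k \/ pf (Up i k) = Down i (k-1)).
Proof.
  intros Hu. destruct HL as [H1 _]. destruct (Hpf _ Hu) as [Hp|Hp];
    destruct (H1 _ Hp) as [Ha [Hb Hc]]; simpl in *.
  - split; auto. apply adj_up; auto.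
  - split; auto. apply adj_up, adj_sym; auto.
Qed.

Lemma pf_inj i1 k1 i2 k2 : R (Up i1 k1) -> R (Up i2 k2) -> pf (Up i1 k1) = pf (Up i2 k2) ->
  Up i1 k1 = Up i2 k2.
Proof.
  intros H1 H2 E. pose proof HL as [A B].
  destruct (pf_prop i1 k1 H1) as [Hd Hdown].
  destruct (B _ Hd) as [p [_ Hu]].
  assert (P1 : exists q, L q /\ (pf (Up i1 k1) = fst q \/ pf (Up i1 k1) = snd q) /\
                 (Up i1 k1 = fst q \/ Up i1 k1 = snd q)).
  { destruct (Hpf _ H1) as [Hp|Hp]; [exists (Up i1 k1, pf (Up i1 k1))|exists (pf (Up i1 k1), Up i1 k1)];
    simpl; auto. }
  assert (P2 : exists q, L q /\ (pf (Up i1 k1) = fst q \/ pf (Up i1 k1) = snd q) /\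
                 (Up i2 k2 = fst q \/ Up i2 k2 = snd q)).
  { rewrite E. destruct (Hpf _ H2) as [Hp|Hp];
    [exists (Up i2 k2, pf (Up i2 k2))|exists (pf (Up i2 k2), Up i2 k2)]; simpl; auto. }
  destruct P1 as [q1 [Lq1 [Dq1 Uq1]]]. destruct P2 as [q2 [Lq2 [Dq2 Uq2]]].
  assert (q1 = q2) by (rewrite <- (Hu q1), <- (Hu q2); auto).
  subst q2. destruct q1 as [a b]. simpl in *.
  destruct Hdown as [Ed|[Ed|Ed]]; rewrite Ed in *;
  destruct Uq1 as [E1|E1]; destruct Uq2 as [E2|E2]; destruct Dq1 as [E3|E3]; congruence.
Qed.

Definition rowsU (R : region) (I0 : Z) (W : nat) (rows : list Z) : list tri :=
  flat_map (fun k => map (fun i => Up i k) (filter (fun i => dec (R (Up i k))) (zrange I0 W))) rows.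
Definition rowsD (R : region) (I0 : Z) (W : nat) (rows : list Z) : list tri :=
  flat_map (fun k => map (fun i => Down i k) (filter (fun i => dec (R (Down i k))) (zrange I0 W))) rows.
End Count.

Lemma in_rowsU R I0 W rows t : In t (rowsU R I0 W rows) <->
  exists i k, t = Up i k /\ In k rows /\ I0 <= i < I0 + Z.of_nat W /\ R (Up i k).
Proof.
  unfold rowsU. rewrite in_flat_map. split.
  - intros [k [Hk Ht]]. apply in_map_iff in Ht. destruct Ht as [i [E Hi]].
    apply filter_In in Hi. destruct Hi as [Hi Hd]. apply dec_t in Hd. apply in_zrange in Hi.
    exists i, k. auto.
  - intros [i [k [E [Hk [Hi HR]]]]]. exists k. split; auto. apply in_map_iff. exists i. split; auto.
    apply filter_In. split; [apply in_zrange; auto|]. apply dec_true. auto.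
Qed.
Lemma in_rowsD R I0 W rows t : In t (rowsD R I0 W rows) <->
  exists i k, t = Down i k /\ In k rows /\ I0 <= i < I0 + Z.of_nat W /\ R (Down i k).
Proof.
  unfold rowsD. rewrite in_flat_map. split.
  - intros [k [Hk Ht]]. apply in_map_iff in Ht. destruct Ht as [i [E Hi]].
    apply filter_In in Hi. destruct Hi as [Hi Hd]. apply dec_t in Hd. apply in_zrange in Hi.
    exists i, k. auto.
  - intros [i [k [E [Hk [Hi HR]]]]]. exists k. split; auto. apply in_map_iff. exists i. split; auto.
    apply filter_In. split; [apply in_zrange; auto|]. apply dec_true. auto.
Qed.

Lemma NoDup_rowsU R I0 W lo n : NoDup (rowsU R I0 W (zrange lo n)).
Proof.
  revert lo. induction n as [|n IH]; intros lo; [constructor|].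
  unfold rowsU. simpl. fold (rowsU R I0 W (zrange (lo+1) n)). apply NoDup_app.
  - apply Injective_map_NoDup; [intros x y E; congruence|]. apply NoDup_filter, NoDup_zrange.
  - apply IH.
  - intros t Ht Ht'. apply in_map_iff in Ht. destruct Ht as [i [E _]]. subst t.
    apply in_rowsU in Ht'. destruct Ht' as [i' [k [E [Hk _]]]]. injection E; intros; subst.
    apply in_zrange in Hk. lia.
Qed.

Lemma length_rowsU R I0 W rows :
  length (rowsU R I0 W rows) = list_sum (map (fun k => cnt (fun i => R (Up i k)) I0 W) rows).
Proof.
  unfold rowsU. rewrite length_flat_map. f_equal. apply map_ext. intros k.
  rewrite length_map. reflexivity.
Qed.
Lemma length_rowsD R I0 W rows :
  length (rowsD R I0 W rows) = list_sum (map (fun k => cnt (fun i => R (Down i k)) I0 W) rows).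
Proof.
  unfold rowsD. rewrite length_flat_map. f_equal. apply map_ext. intros k.
  rewrite length_map. reflexivity.
Qed.

Lemma up_le_down (R : region) (I0 : Z) (W : nat) (r0 : Z) (nr : nat) :
  tileable R ->
  (forall i k, R (Down i k) -> I0 <= i < I0 + Z.of_nat W) ->
  (forall i k, R (Down i k) -> r0 <= k) ->
  (list_sum (map (fun k => cnt (fun i => R (Up i k)) I0 W) (zrange r0 nr)) <=
   list_sum (map (fun k => cnt (fun i => R (Down i k)) I0 W) (zrange r0 nr)))%nat.
Proof.
  intros [L HL] Hbox Hbot.
  destruct (partner_ex R L HL) as [pf Hpf].
  rewrite <- length_rowsU, <- length_rowsD.
  rewrite <- (length_map pf).
  apply NoDup_incl_length.
  - apply NoDup_map_NoDup_ForallPairs; [|apply NoDup_rowsU].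
    intros x y Hx Hy E. apply in_rowsU in Hx, Hy.
    destruct Hx as [i1 [k1 [-> [_ [_ H1]]]]]. destruct Hy as [i2 [k2 [-> [_ [_ H2]]]]].
    apply (pf_inj R L HL pf Hpf); auto.
  - intros d Hd. apply in_map_iff in Hd. destruct Hd as [u [E Hu]]. subst d.
    apply in_rowsU in Hu. destruct Hu as [i [k [-> [Hk [Hi HR]]]]].
    destruct (pf_prop R L HL pf Hpf i k HR) as [Hd Hn].
    apply in_rowsD. apply in_zrange in Hk.
    destruct Hn as [E|[E|E]]; rewrite E in *.
    + exists i, k. split; [reflexivity|]. split; [apply in_zrange; lia|].
      split; [apply (Hbox _ _ Hd)|exact Hd].
    + exists (i-1), k. split; [reflexivity|]. split; [apply in_zrange; lia|].
      split; [apply (Hbox _ _ Hd)|exact Hd].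
    + exists i, (k-1). specialize (Hbot _ _ Hd). split; [reflexivity|]. split; [apply in_zrange; lia|].
      split; [apply (Hbox _ _ Hd)|exact Hd].
Qed.

Definition cornersOK (p : prm) : Prop :=
  let u := pu p in let v := pv p in let f := pf p in
  let a := pa p in let b := pb p in let c := pc p in
  let a2 := pa2 p in let b2 := pb2 p in let c2 := pc2 p in
  hexP p (u - a) (v + a) /\ hexP p u (v + a) /\ hexP p u v /\
  hexP p u (v - a2) /\ hexP p (u + a2) (v - a2) /\
  hexP p u (v - f) /\ hexP p (u + b2) (v - f) /\ hexP p u (v - f + b2) /\
  hexP p (u - b) (v - f) /\ hexP p u (v - f - b) /\
  hexP p (u + f - c2) (v - f) /\ hexP p (u + f) (v - f) /\ hexP p (u + f - c2) (v - f + c2) /\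
  hexP p (u + f + c) (v - f) /\ hexP p (u + f + c) (v - f - c).

Definition Cn (p : prm) : Prop :=
  0 <= pa p /\ 0 <= pb p /\ 0 <= pc p /\ 0 <= pa2 p /\ 0 <= pb2 p /\ 0 <= pc2 p /\
  pa2 p + pb2 p + pc2 p <= pf p /\ cornersOK p.

Section NecS.
Variable p : prm.
Hypothesis Hp : Cn p.
Let u := pu p. Let v := pv p. Let f := pf p. Let b := pb p. Let c := pc p.
Let W := Z.to_nat (phE p - phW p).

Ltac cn := destruct Hp as (Ha & Hb & Hc & Ha2 & Hb2 & Hc2 & Hf & Hcor);
  unfold cornersOK, hexP in Hcor; simpl in Hcor; subst u v f b c W.

Lemma row_bound k : phS p <= k < pv p - pf p ->
  Z.of_nat (cnt (fun i => Reg p (Down i k)) (phW p) W) <=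
  Z.of_nat (cnt (fun i => Reg p (Up i k)) (phW p) W) + 1
   - (if dec (pv p - pf p - pb p <= k) then 1 else 0)
   - (if dec (pv p - pf p - pc p <= k) then 1 else 0).
Proof.
  intros Hk. cn.
  set (hU := fun i => Z.max (phW p) (phSW p - k) <= i <= Z.min (phE p - 1) (phNE p - k - 1)).
  set (hD := fun i => Z.max (phW p) (phSW p - k - 1) <= i <= Z.min (phE p - 1) (phNE p - k - 2)).
  set (bU := fun i => pu p - pb p + pv p - pf p - k <= i <= pu p - 1).
  set (bD := fun i => pu p - pb p + pv p - pf p - k - 1 <= i <= pu p - 1).
  set (cU := fun i => pu p + pv p - k <= i <= pu p + pf p + pc p - 1).
  set (cD := fun i => pu p + pv p - k - 1 <= i <= pu p + pf p + pc p - 1).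
  assert (EU : cnt (fun i => Reg p (Up i k)) (phW p) (Z.to_nat (phE p - phW p)) =
               cnt (fun i => (hU i /\ ~ bU i) /\ ~ cU i) (phW p) (Z.to_nat (phE p - phW p))).
  { apply cnt_ext. intros i Hi. subst hU bU cU. simpl. unfold Reg.
    split.
    - intros (H0 & H1 & H2 & H3 & H4 & H5 & H6). unfold triP, hexP in H0; simpl in H0.
      split; [split|].
      + clear -H0 Hk. lia.
      + intro HB. apply H4. unfold triP, LBo, downP. simpl. lia.
      + intro HC. apply H6. unfold triP, LCo, downP. simpl. lia.
    - intros [[H0 H1] H2]. split; [unfold triP, hexP; simpl; lia|].
      repeat split; intro HL; unfold triP, LAo, LAi, LBi, LBo, LCi, LCo, upP, downP in HL; simpl in HL;
        try (clear -HL Hk Ha Ha2 Hb Hc Hb2 Hc2 Hf; lia); try (apply H1; lia); try (apply H2; lia). }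
  assert (ED : cnt (fun i => Reg p (Down i k)) (phW p) (Z.to_nat (phE p - phW p)) =
               cnt (fun i => (hD i /\ ~ bD i) /\ ~ cD i) (phW p) (Z.to_nat (phE p - phW p))).
  { apply cnt_ext. intros i Hi. subst hD bD cD. simpl. unfold Reg.
    split.
    - intros (H0 & H1 & H2 & H3 & H4 & H5 & H6). unfold triP, hexP in H0; simpl in H0.
      split; [split|].
      + clear -H0 Hk. lia.
      + intro HB. apply H4. unfold triP, LBo, downP. simpl. lia.
      + intro HC. apply H6. unfold triP, LCo, downP. simpl. lia.
    - intros [[H0 H1] H2]. split; [unfold triP, hexP; simpl; lia|].
      repeat split; intro HL; unfold triP, LAo, LAi, LBi, LBo, LCi, LCo, upP, downP in HL; simpl in HL;
        try (clear -HL Hk Ha Ha2 Hb Hc Hb2 Hc2 Hf; lia); try (apply H1; lia); try (apply H2; lia). }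
  rewrite EU, ED.
  set (n := Z.to_nat (phE p - phW p)). set (lo := phW p).
  assert (Hn : lo + Z.of_nat n = phE p) by (subst lo n; lia).
  assert (SU : cnt hU lo n = (cnt bU lo n + cnt cU lo n + cnt (fun i => (hU i /\ ~ bU i) /\ ~ cU i) lo n)%nat).
  { rewrite (cnt_split hU bU), (cnt_split (fun i => hU i /\ ~ bU i) cU).
    rewrite (cnt_ext (fun i => hU i /\ bU i) bU).
    2:{ intros i Hi. subst hU bU. simpl. split; [tauto|]. intros HB; split; [|exact HB]. lia. }
    rewrite (cnt_ext (fun i => (hU i /\ ~ bU i) /\ cU i) cU).
    2:{ intros i Hi. subst hU bU cU. simpl. split; [tauto|]. intros HC; split; [|exact HC]. lia. }
    lia. }
  assert (SD : cnt hD lo n = (cnt bD lo n + cnt cD lo n + cnt (fun i => (hD i /\ ~ bD i) /\ ~ cD i) lo n)%nat).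
  { rewrite (cnt_split hD bD), (cnt_split (fun i => hD i /\ ~ bD i) cD).
    rewrite (cnt_ext (fun i => hD i /\ bD i) bD).
    2:{ intros i Hi. subst hD bD. simpl. split; [tauto|]. intros HB; split; [|exact HB]. lia. }
    rewrite (cnt_ext (fun i => (hD i /\ ~ bD i) /\ cD i) cD).
    2:{ intros i Hi. subst hD bD cD. simpl. split; [tauto|]. intros HC; split; [|exact HC]. lia. }
    lia. }
  assert (I1 : Z.of_nat (cnt hD lo n) <= Z.of_nat (cnt hU lo n) + 1).
  { subst hD hU. apply cnt_int_le; lia. }
  assert (I2 : Z.of_nat (cnt bD lo n) = Z.of_nat (cnt bU lo n) + (if dec (pv p - pf p - pb p <= k) then 1 else 0)).
  { subst bD bU. rewrite cnt_int_shift by lia.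
    rewrite (dec_iff (pu p - pb p + pv p - pf p - k - 1 <= pu p - 1) (pv p - pf p - pb p <= k)) by lia. reflexivity. }
  assert (I3 : Z.of_nat (cnt cD lo n) = Z.of_nat (cnt cU lo n) + (if dec (pv p - pf p - pc p <= k) then 1 else 0)).
  { subst cD cU. rewrite cnt_int_shift by lia.
    rewrite (dec_iff (pu p + pv p - k - 1 <= pu p + pf p + pc p - 1) (pv p - pf p - pc p <= k)) by lia. reflexivity. }
  lia.
Qed.
End NecS.

Lemma nec_S (p : prm) : Cn p -> tileable (Reg p) -> 0 <= pv p - pf p - phS p - pb p - pc p.
Proof.
  intros Hp T.
  pose proof Hp as Hp'.
  destruct Hp' as (Ha & Hb & Hc & Ha2 & Hb2 & Hc2 & Hf & Hcor).
  unfold cornersOK, hexP in Hcor; simpl in Hcor.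
  set (nr := Z.to_nat (pv p - pf p - phS p)).
  set (W := Z.to_nat (phE p - phW p)).
  assert (Hnr : Z.of_nat nr = pv p - pf p - phS p) by (subst nr; lia).
  pose proof (up_le_down (Reg p) (phW p) W (phS p) nr T) as H.
  assert (H1 : forall i k, Reg p (Down i k) -> phW p <= i < phW p + Z.of_nat W).
  { intros i k [Hx _]. unfold triP, hexP in Hx. simpl in Hx. subst W. lia. }
  assert (H2 : forall i k, Reg p (Down i k) -> phS p <= k).
  { intros i k [Hx _]. unfold triP, hexP in Hx. simpl in Hx. lia. }
  specialize (H H1 H2).
  apply Nat2Z.inj_le in H. rewrite !list_sum_zsum in H.
  assert (H3 : zsum (fun k => Z.of_nat (cnt (fun i => Reg p (Down i k)) (phW p) W)) (zrange (phS p) nr) <=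
     zsum (fun k => Z.of_nat (cnt (fun i => Reg p (Up i k)) (phW p) W) + 1
        - (if dec (pv p - pf p - pb p <= k) then 1 else 0)
        - (if dec (pv p - pf p - pc p <= k) then 1 else 0)) (zrange (phS p) nr)).
  { apply zsum_le. intros k Hk. apply in_zrange in Hk. apply row_bound; auto. lia. }
  rewrite zsum_lin, length_zrange in H3.
  rewrite (zsum_cnt (fun k => pv p - pf p - pb p <= k)) in H3.
  rewrite (zsum_cnt (fun k => pv p - pf p - pc p <= k)) in H3.
  rewrite (cnt_ext (fun k => pv p - pf p - pb p <= k) (fun k => pv p - pf p - pb p <= k <= phS p + Z.of_nat nr)) in H3
    by (intros; lia).
  rewrite (cnt_ext (fun k => pv p - pf p - pc p <= k) (fun k => pv p - pf p - pc p <= k <= phS p + Z.of_nat nr)) in H3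
    by (intros; lia).
  rewrite !cnt_interval in H3. lia.
Qed.

Definition rotT (t : tri) : tri :=
  match t with Up i j => Up (-i-j-1) i | Down i j => Down (-i-j-2) i end.

Lemma rot3 t : rotT (rotT (rotT t)) = t.
Proof. destruct t as [i j|i j]; simpl; f_equal; lia. Qed.

Lemma adj_down_down i j i' j' : adjacent (Down i j) (Down i' j') -> False.
Proof.
  intros [Hne [v [w [Hvw [A [B [C D]]]]]]]. simpl in *. apply Hne.
  assert (i = i' /\ j = j').
  { destruct A as [A|[A|[A|[]]]]; destruct B as [B|[B|[B|[]]]];
    destruct C as [C|[C|[C|[]]]]; destruct D as [D|[D|[D|[]]]]; subst v w;
    try (exfalso; apply Hvw; reflexivity);
    repeat match goal with H : (_,_) = (_,_) |- _ => injection H; clear H; intros end;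
    lia. }
  destruct H; subst; reflexivity.
Qed.

Lemma adj_rot a b : adjacent a b -> adjacent (rotT a) (rotT b).
Proof.
  intros H.
  assert (G : forall i j t, adjacent (Up i j) t -> adjacent (rotT (Up i j)) (rotT t)).
  { intros i j t Ht. apply adj_up in Ht. simpl.
    destruct Ht as [E|[E|E]]; subst t; simpl.
    - replace (Down (- i - j - 2) i) with (Down (- i - j - 1 - 1) i) by (f_equal; lia). apply adjL.
    - replace (Down (- (i - 1) - j - 2) (i - 1)) with (Down (- i - j - 1) (i - 1)) by (f_equal; lia).
      apply adjV.
    - replace (Down (- i - (j - 1) - 2) i) with (Down (- i - j - 1) i) by (f_equal; lia). apply adjR. }
  destruct a as [i j|i j].
  - apply G; auto.
  - destruct b as [i' j'|i' j'].
    + apply adj_sym. apply G. apply adj_sym. auto.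
    + exfalso. eapply adj_down_down; eauto.
Qed.

Lemma adj_rot_inv a b : adjacent (rotT a) (rotT b) -> adjacent a b.
Proof.
  intros H. apply adj_rot in H. apply adj_rot in H. rewrite !rot3 in H. exact H.
Qed.

Lemma tileable_rot (R : region) : tileable R -> tileable (fun t => R (rotT t)).
Proof.
  intros [L [A B]].
  exists (fun p => L (rotT (fst p), rotT (snd p))). split.
  - intros [a b] Hp. simpl in *. destruct (A _ Hp) as [Ha [Hb Hc]]. simpl in *.
    split; [apply adj_rot_inv; auto|auto].
  - intros s Hs. destruct (B _ Hs) as [[q1 q2] [[Hq Hsq] Hu]]. simpl in Hsq.
    exists (rotT (rotT q1), rotT (rotT q2)). simpl. split.
    + cbn [fst snd]. rewrite !rot3. split; auto.
      destruct Hsq as [E|E]; [left|right]; rewrite <- E; rewrite rot3; reflexivity.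
    + intros [p1 p2] [Hp Hsp]. cbn [fst snd] in *.
      assert (E : (q1, q2) = (rotT p1, rotT p2)).
      { apply Hu. split; auto. simpl. destruct Hsp as [E|E]; subst; auto. }
      injection E; intros E2 E1. rewrite E1, E2, !rot3. reflexivity.
Qed.

Definition rotp (p : prm) : prm :=
  {| pu := pv p - pf p; pv := - pu p - pv p + pf p; pf := pf p;
     pa := pb p; pb := pc p; pc := pa p; pa2 := pb2 p; pb2 := pc2 p; pc2 := pa2 p;
     phW := phS p; phE := phN p; phS := - phNE p; phN := - phSW p; phSW := - phE p; phNE := - phW p |}.

Lemma Reg_rotp p t : Reg (rotp p) t <-> Reg p (rotT t).
Proof.
  assert (E0 : triP (hexP (rotp p)) t <-> triP (hexP p) (rotT t)).
  { destruct t as [i j|i j]; unfold triP, hexP, rotp; simpl; lia. }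
  assert (E1 : triP (LAo (rotp p)) t <-> triP (LBo p) (rotT t)).
  { destruct t as [i j|i j]; unfold triP, LAo, LBo, downP, rotp; simpl; lia. }
  assert (E2 : triP (LAi (rotp p)) t <-> triP (LBi p) (rotT t)).
  { destruct t as [i j|i j]; unfold triP, LAi, LBi, upP, rotp; simpl; lia. }
  assert (E3 : triP (LBi (rotp p)) t <-> triP (LCi p) (rotT t)).
  { destruct t as [i j|i j]; unfold triP, LBi, LCi, upP, rotp; simpl; lia. }
  assert (E4 : triP (LBo (rotp p)) t <-> triP (LCo p) (rotT t)).
  { destruct t as [i j|i j]; unfold triP, LBo, LCo, downP, rotp; simpl; lia. }
  assert (E5 : triP (LCi (rotp p)) t <-> triP (LAi p) (rotT t)).
  { destruct t as [i j|i j]; unfold triP, LCi, LAi, upP, rotp; simpl; lia. }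
  assert (E6 : triP (LCo (rotp p)) t <-> triP (LAo p) (rotT t)).
  { destruct t as [i j|i j]; unfold triP, LCo, LAo, downP, rotp; simpl; lia. }
  unfold Reg. rewrite E0, E1, E2, E3, E4, E5, E6. tauto.
Qed.

Lemma Cn_rotp p : Cn p -> Cn (rotp p).
Proof.
  unfold Cn, cornersOK, hexP, rotp. simpl. intros H. lia.
Qed.

Lemma nec_all (p : prm) : Cn p -> tileable (Reg p) ->
  0 <= pv p - pf p - phS p - pb p - pc p /\
  0 <= phNE p - (pu p + pv p) - pa p - pc p /\
  0 <= pu p - phW p - pa p - pb p.
Proof.
  intros Hc T. split; [|split].
  - apply nec_S; auto.
  - assert (T1 : tileable (Reg (rotp p))).
    { apply (tileable_ext (fun t => Reg p (rotT t))); [intros t; rewrite Reg_rotp; tauto|].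
      apply tileable_rot; auto. }
    pose proof (nec_S (rotp p) (Cn_rotp p Hc) T1) as H. unfold rotp in H. simpl in H. lia.
  - assert (T1 : tileable (Reg (rotp p))).
    { apply (tileable_ext (fun t => Reg p (rotT t))); [intros t; rewrite Reg_rotp; tauto|].
      apply tileable_rot; auto. }
    assert (T2 : tileable (Reg (rotp (rotp p)))).
    { apply (tileable_ext (fun t => Reg (rotp p) (rotT t))); [intros t; symmetry; apply Reg_rotp|].
      apply tileable_rot; auto. }
    pose proof (nec_S (rotp (rotp p)) (Cn_rotp _ (Cn_rotp p Hc)) T2) as H.
    unfold rotp in H. simpl in H. lia.
Qed.

Lemma Cn_of_triad (T : triad) : is_triad T -> Cn (prm_of T).
Proof.
  intros HT. pose proof (is_triad_unfold T HT) as (Hf & _ & _ & _ & _ & _ & _ & Hl).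
  assert (LA : forall w, lobeA_out T w -> hex_pts T w) by (apply Hl; simpl; tauto).
  assert (LAi : forall w, lobeA_in T w -> hex_pts T w) by (apply Hl; simpl; tauto).
  assert (LBi : forall w, lobeB_in T w -> hex_pts T w) by (apply Hl; simpl; tauto).
  assert (LB : forall w, lobeB_out T w -> hex_pts T w) by (apply Hl; simpl; tauto).
  assert (LCi : forall w, lobeC_in T w -> hex_pts T w) by (apply Hl; simpl; tauto).
  assert (LC : forall w, lobeC_out T w -> hex_pts T w) by (apply Hl; simpl; tauto).
  unfold lobeA_out, lobeA_in, lobeB_in, lobeB_out, lobeC_in, lobeC_out, up_pts, down_pts,
    ptA, ptB, ptC, hex_pts in *. simpl in *.
  set (u := fst (tA T)) in *. set (v := snd (tA T)) in *.
  set (a := Z.of_nat (ta T)) in *. set (b := Z.of_nat (tb T)) in *. set (c := Z.of_nat (tc T)) in *.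
  set (a2 := Z.of_nat (ta' T)) in *. set (b2 := Z.of_nat (tb' T)) in *. set (c2 := Z.of_nat (tc' T)) in *.
  set (f := Z.of_nat (tf T)) in *.
  assert (Hfz : a2 + b2 + c2 <= f) by (subst a2 b2 c2 f; lia).
  assert (Hnn : 0 <= a /\ 0 <= b /\ 0 <= c /\ 0 <= a2 /\ 0 <= b2 /\ 0 <= c2) by (subst a b c a2 b2 c2; lia).
  pose proof (LA (u - a, v + a) ltac:(simpl; lia)) as K0. simpl in K0.
  pose proof (LA (u, v + a) ltac:(simpl; lia)) as K1. simpl in K1.
  pose proof (LA (u, v) ltac:(simpl; lia)) as K2. simpl in K2.
  pose proof (LAi (u, v - a2) ltac:(simpl; lia)) as K3. simpl in K3.
  pose proof (LAi (u + a2, v - a2) ltac:(simpl; lia)) as K4. simpl in K4.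
  pose proof (LBi (u, v - f) ltac:(simpl; lia)) as K5. simpl in K5.
  pose proof (LBi (u + b2, v - f) ltac:(simpl; lia)) as K6. simpl in K6.
  pose proof (LBi (u, v - f + b2) ltac:(simpl; lia)) as K7. simpl in K7.
  pose proof (LB (u - b, v - f) ltac:(simpl; lia)) as K8. simpl in K8.
  pose proof (LB (u, v - f - b) ltac:(simpl; lia)) as K9. simpl in K9.
  pose proof (LCi (u + f - c2, v - f) ltac:(simpl; lia)) as K10. simpl in K10.
  pose proof (LCi (u + f, v - f) ltac:(simpl; lia)) as K11. simpl in K11.
  pose proof (LCi (u + f - c2, v - f + c2) ltac:(simpl; lia)) as K12. simpl in K12.
  pose proof (LC (u + f + c, v - f) ltac:(simpl; lia)) as K13. simpl in K13.
  pose proof (LC (u + f + c, v - f - c) ltac:(simpl; lia)) as K14. simpl in K14.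
  unfold Cn, cornersOK, hexP, prm_of. simpl. fold u v a b c a2 b2 c2 f.
  repeat split; lia.
Qed.

Lemma nec_triad (T : triad) : is_triad T -> tileable (triad_region T) ->
  0 <= S_depth T /\ 0 <= NE_depth T /\ 0 <= NW_depth T.
Proof.
  intros HT Ht.
  assert (Hr : tileable (Reg (prm_of T))).
  { apply (tileable_ext (triad_region T)); [intros t; apply triad_region_Reg|exact Ht]. }
  pose proof (nec_all (prm_of T) (Cn_of_triad T HT) Hr) as H.
  unfold S_depth, NE_depth, NW_depth, ptA, ptB, prm_of in *. simpl in *. lia.
Qed.

Lemma squeeze_depths (T T' : triad) : is_triad T -> squeezing T T' ->
  S_depth T' = S_depth T /\ NE_depth T' = NE_depth T /\ NW_depth T' = NW_depth T.
Proof.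
  intros HT Hs. pose proof (is_triad_unfold T HT) as (Hf & _).
  destruct Hs as [d T0 Hd|d T0 Hd|d T0 Hd|d T0 Hd|d T0 Hd|d T0 Hd];
  unfold S_depth, NE_depth, NW_depth, ptA, ptB, sq_out_A, sq_in_A, sq_out_B, sq_in_B,
    sq_out_C, sq_in_C; simpl; lia.
Qed.

Lemma crt_triad (T T' : triad) : clos_refl_trans triad triad_squeezing T T' ->
  is_triad T -> is_triad T'.
Proof.
  induction 1 as [x y Hxy|x|x y z _ IH1 _ IH2]; intros H; auto.
  destruct Hxy as (_ & H' & _). exact H'.
Qed.

Theorem lemma2p1 :
  (* (a) *)
  (forall T : triad, is_triad T ->
     (tileable (triad_region T) <->
      (0 <= S_depth T /\ 0 <= NE_depth T /\ 0 <= NW_depth T))) /\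
  (* (b) *)
  (forall T T' : triad, is_triad T -> squeezing T T' ->
     S_depth T' = S_depth T /\ NE_depth T' = NE_depth T /\
     NW_depth T' = NW_depth T) /\
  (* (c) *)
  (forall T T' : triad, is_triad T -> tileable (triad_region T) ->
     clos_refl_trans triad triad_squeezing T T' ->
     tileable (triad_region T')).
Proof.
  split; [|split].
  - intros T HT. split.
    + apply nec_triad; auto.
    + intros (H1 & H2 & H3). apply suff_triad; auto.
  - apply squeeze_depths.
  - intros T T' HT Ht Hc. revert HT Ht.
    induction Hc as [x y Hxy|x|x y z Hxy IH1 Hyz IH2]; intros HT Ht; auto.
    + destruct Hxy as (_ & Hy & Hs).
      destruct (nec_triad x HT Ht) as (D1 & D2 & D3).
      destruct (squeeze_depths x y HT Hs) as (E1 & E2 & E3).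
      apply suff_triad; auto; lia.
    + apply IH2; [apply (crt_triad x y Hxy HT)|apply IH1; auto].
Qed.
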